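(* Let $\mathcal{A}$ be a u-MPS core tensor over a finite alphabet $\Sigma$ with bond dimension $D$, and let $R$ be an arbitrary (possibly ambiguous) regular expression over $\Sigma$. Then the generalized right transfer operator $\mathcal{E}^{r}_R$ converges if and only if the generalized left transfer operator $\mathcal{E}^{\ell}_R$ converges, and in this case, for all $Q_r, Q_\ell \in \mathbb{R}^{D\times D}$, $$\mathcal{E}^{r}_R(Q_r) = \sum_{s\in\Sigma^*} |s|_R\, \mathcal{A}(s)\, Q_r\, \mathcal{A}(s)^T, \qquad \mathcal{E}^{\ell}_R(Q_\ell) = \sum_{s\in\Sigma^*} |s|_R\, \mathcal{A}(s)^T Q_\ell\, \mathcal{A}(s).$$ In particular, if $R$ is unambiguous (i.e. $|s|_R\in\{0,1\}$ for all $s$), then $\mathcal{E}^{r}_R(Q_r) = \sum_{s\in \mathcal{L}(R)} \mathcal{A}(s) Q_r \mathcal{A}(s)^T$ and $\mathcal{E}^{\ell}_R(Q_\ell) = \sum_{s\in \mathcal{L}(R)} \mathcal{A}(s)^T Q_\ell \mathcal{A}(s)$, where $\mathcal{L}(R)$ is the set of strings matching $R$.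
   Context: A u-MPS (uniform matrix product state) over a finite alphabet $\Sigma$ of size $d$ consists of a core tensor $\mathcal{A}$ of shape $(D,d,D)$, which assigns to each character $c\in\Sigma$ a matrix $\mathcal{A}(c)\in\mathbb{R}^{D\times D}$, together with boundary vectors $\alpha,\omega\in\mathbb{R}^D$. For a string $s=s_1\cdots s_n\in\Sigma^*$, $\mathcal{A}(s):=\mathcal{A}(s_1)\cdots\mathcal{A}(s_n)$, with $\mathcal{A}(\varepsilon)=I$ for the empty string $\varepsilon$. Regular expressions (regex) are syntax trees built from: single characters $c\in\Sigma$; concatenations $R_1R_2$; unions $R_1|R_2$; Kleene closures $S^*$. The match count $|s|_R\in\mathbb{N}\cup\{\infty\}$ of a string $s$ against $R$ is defined recursively: $|s|_c=1$ if $s=c$ and $0$ otherwise; $|s|_{R_1R_2}=\sum_{s_1s_2=s}|s_1|_{R_1}|s_2|_{R_2}$ (sum over all splittings of $s$ into prefix and suffix); $|s|_{R_1|R_2}=|s|_{R_1}+|s|_{R_2}$; $|s|_{S^*}=\sum_{n\ge0}\sum_{s_1\cdots s_n=s}|s_1|_S\cdots|s_n|_S$ (sum over all splittings into $n$ contiguous pieces; the $n=0$ term is $1$ if $s=\varepsilon$ and $0$ otherwise). $R$ is unambiguous if $|s|_R\in\{0,1\}$ for all $s$. Generalized transfer operators are linear maps on $D\times D$ matrices defined recursively: $\mathcal{E}^r_c(Q)=\mathcal{A}(c)Q\mathcal{A}(c)^T$, $\mathcal{E}^\ell_c(Q)=\mathcal{A}(c)^TQ\mathcal{A}(c)$; $\mathcal{E}^r_{R_1R_2}=\mathcal{E}^r_{R_1}\circ\mathcal{E}^r_{R_2}$,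 $\mathcal{E}^\ell_{R_1R_2}=\mathcal{E}^\ell_{R_2}\circ\mathcal{E}^\ell_{R_1}$; $\mathcal{E}^{r}_{R_1|R_2}=\mathcal{E}^{r}_{R_1}+\mathcal{E}^{r}_{R_2}$, $\mathcal{E}^{\ell}_{R_1|R_2}=\mathcal{E}^{\ell}_{R_1}+\mathcal{E}^{\ell}_{R_2}$; $\mathcal{E}^r_{S^*}(Q)=\sum_{n=0}^\infty(\mathcal{E}^r_S)^{\circ n}(Q)$, $\mathcal{E}^\ell_{S^*}(Q)=\sum_{n=0}^\infty(\mathcal{E}^\ell_S)^{\circ n}(Q)$, where $(\cdot)^{\circ 0}$ is the identity map. $\mathcal{E}^r_R$ (resp. $\mathcal{E}^\ell_R$) is said to converge if every infinite series arising from Kleene closures in this recursive definition converges (equivalently, for every subexpression $S^*$ of $R$, the spectral radius of the corresponding operator $\mathcal{E}^r_S$, resp. $\mathcal{E}^\ell_S$, is $<1$). *)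

(* Defs.v *)
From Stdlib Require Import Reals List Arith ClassicalEpsilon.
Import ListNotations.
Open Scope R_scope.

(** * Real matrices: a D x D matrix is a function nat -> nat -> R, of which
    only the entries (i,j) with i,j < D are meaningful. *)
Definition Mat := nat -> nat -> R.

Fixpoint rsum (n : nat) (f : nat -> R) : R :=
  match n with O => 0 | S m => rsum m f + f m end.

Definition mmul (D : nat) (M N : Mat) : Mat :=
  fun i j => rsum D (fun k => M i k * N k j).
Definition mtr (M : Mat) : Mat := fun i j => M j i.
Definition madd (M N : Mat) : Mat := fun i j => M i j + N i j.
Definition mscale (a : R) (M : Mat) : Mat := fun i j => a * M i j.
Definition mzero : Mat := fun _ _ => 0.
Definition mid : Mat := fun i j => if Nat.eq_dec i j then 1 else 0.

Definition mser_cv (D : nat) (u : nat -> Mat) (L : Mat) : Prop :=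
  forall i j, (i < D)%nat -> (j < D)%nat ->
    Un_cv (fun N => rsum (S N) (fun n => u n i j)) (L i j).

(** * u-MPS. Alphabet Sigma = {0,...,d-1}; a core tensor of shape (D,d,D) is
    A : nat -> Mat, A c being the matrix A(c). Strings are lists. *)
Definition Aword (D : nat) (A : nat -> Mat) (s : list nat) : Mat :=
  fold_right (fun c M => mmul D (A c) M) mid s.

Definition word_over (d : nat) (s : list nat) : Prop := Forall (fun c => (c < d)%nat) s.

Fixpoint words (d n : nat) : list (list nat) :=
  match n with
  | O => [ [] ]
  | S m => flat_map (fun w => map (fun c => c :: w) (seq 0 d)) (words d m)
  end.

Definition wsum (d n : nat) (F : list nat -> Mat) : Mat :=
  fold_right madd mzero (map F (words d n)).

Inductive regex : Type :=
| RChr (c : nat)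
| RCat (r1 r2 : regex)
| RAlt (r1 r2 : regex)
| RStar (r : regex).

Fixpoint regex_over (d : nat) (r : regex) : Prop :=
  match r with
  | RChr c => (c < d)%nat
  | RCat r1 r2 | RAlt r1 r2 => regex_over d r1 /\ regex_over d r2
  | RStar r1 => regex_over d r1
  end.

(** * Match counts in N u {oo} ( None = oo ) *)
Definition enat := option nat.
Definition eadd (x y : enat) : enat :=
  match x, y with Some a, Some b => Some (a + b)%nat | _, _ => None end.
(* convention 0 * oo = 0 *)
Definition emul (x y : enat) : enat :=
  match x, y with
  | Some O, _ | _, Some O => Some O
  | Some a, Some b => Some (a * b)%nat
  | _, _ => None
  end.
Definition ele (x y : enat) : Prop :=
  match x, y with
  | _, None => True
  | None, Some _ => False
  | Some a, Some b => (a <= b)%nat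
  end.

Fixpoint esum (n : nat) (f : nat -> enat) : enat :=
  match n with O => Some O | S m => eadd (esum m f) (f m) end.

Definition esplit (c1 c2 : list nat -> enat) (s : list nat) : enat :=
  esum (S (length s)) (fun i => emul (c1 (firstn i s)) (c2 (skipn i s))).

Fixpoint pieces (c : list nat -> enat) (n : nat) (s : list nat) : enat :=
  match n with
  | O => match s with [] => Some 1%nat | _ => Some O end
  | S m => esplit c (pieces c m) s
  end.

(** supremum in N u {oo} of a sequence (always exists, unique) *)
Definition is_esup (u : nat -> enat) (k : enat) : Prop :=
  (forall N, ele (u N) k) /\ (forall k', (forall N, ele (u N) k') -> ele k k').

Definition eseries (u : nat -> enat) : enat :=
  epsilon (inhabits None) (is_esup (fun N => esum N u)).

Fixpoint cnt (r : regex) (s : list nat) : enat :=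
  match r with
  | RChr c => match s with [c'] => if Nat.eq_dec c c' then Some 1%nat else Some O
                         | _ => Some O end
  | RCat r1 r2 => esplit (cnt r1) (cnt r2) s
  | RAlt r1 r2 => eadd (cnt r1 s) (cnt r2 s)
  | RStar r1 => eseries (fun n => pieces (cnt r1) n s)
  end.

Definition unambiguous (d : nat) (r : regex) : Prop :=
  forall s, word_over d s -> cnt r s = Some O \/ cnt r s = Some 1%nat.

(** |s|_R as a real coefficient (only used where it is finite) *)
Definition coefR (k : enat) : R := match k with Some n => INR n | None => 0 end.
Definition lang_ind (r : regex) (s : list nat) : R :=
  match cnt r s with Some O => 0 | _ => 1 end.

(** * Generalized transfer operators.  ER D A R f : "E^r_R converges and equals f"
    (every Kleene series arising in the recursion converges). *)
Definition conjR (D : nat) (A : nat -> Mat) (s : list nat) (Q : Mat) : Mat :=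
  mmul D (mmul D (Aword D A s) Q) (mtr (Aword D A s)).
Definition conjL (D : nat) (A : nat -> Mat) (s : list nat) (Q : Mat) : Mat :=
  mmul D (mmul D (mtr (Aword D A s)) Q) (Aword D A s).

Inductive ER (D : nat) (A : nat -> Mat) : regex -> (Mat -> Mat) -> Prop :=
| ER_chr c : ER D A (RChr c) (fun Q => mmul D (mmul D (A c) Q) (mtr (A c)))
| ER_cat r1 r2 f1 f2 : ER D A r1 f1 -> ER D A r2 f2 ->
    ER D A (RCat r1 r2) (fun Q => f1 (f2 Q))
| ER_alt r1 r2 f1 f2 : ER D A r1 f1 -> ER D A r2 f2 ->
    ER D A (RAlt r1 r2) (fun Q => madd (f1 Q) (f2 Q))
| ER_star r f g : ER D A r f ->
    (forall Q, mser_cv D (fun n => Nat.iter n f Q) (g Q)) ->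
    ER D A (RStar r) g.

Inductive EL (D : nat) (A : nat -> Mat) : regex -> (Mat -> Mat) -> Prop :=
| EL_chr c : EL D A (RChr c) (fun Q => mmul D (mmul D (mtr (A c)) Q) (A c))
| EL_cat r1 r2 f1 f2 : EL D A r1 f1 -> EL D A r2 f2 ->
    EL D A (RCat r1 r2) (fun Q => f2 (f1 Q))
| EL_alt r1 r2 f1 f2 : EL D A r1 f1 -> EL D A r2 f2 ->
    EL D A (RAlt r1 r2) (fun Q => madd (f1 Q) (f2 Q))
| EL_star r f g : EL D A r f ->
    (forall Q, mser_cv D (fun n => Nat.iter n f Q) (g Q)) ->
    EL D A (RStar r) g.

Definition conv_r D A R : Prop := exists f, ER D A R f.
Definition conv_l D A R : Prop := exists f, EL D A R f.

(* Main.v *)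
Require Import Defs.
From Stdlib Require Import Reals List Arith Lra Lia ClassicalEpsilon.
From Coquelicot Require Coquelicot.
Import ListNotations.
Open Scope R_scope.


Lemma rsum_ext n f g : (forall k, (k < n)%nat -> f k = g k) -> rsum n f = rsum n g.
Proof. induction n; simpl; intros H; [reflexivity|]. rewrite IHn by (intros; apply H; lia). rewrite H by lia. reflexivity. Qed.

Lemma rsum_plus n f g : rsum n (fun k => f k + g k) = rsum n f + rsum n g.
Proof. induction n; simpl; [lra|]. rewrite IHn. lra. Qed.

Lemma rsum_scal n c f : rsum n (fun k => c * f k) = c * rsum n f.
Proof. induction n; simpl; [lra|]. rewrite IHn. lra. Qed.

Lemma rsum_scal_r n c f : rsum n (fun k => f k * c) = rsum n f * c.
Proof. induction n; simpl; [lra|]. rewrite IHn. lra. Qed.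

Lemma rsum_zero n f : (forall k, (k < n)%nat -> f k = 0) -> rsum n f = 0.
Proof. intros H. rewrite (rsum_ext n f (fun _ => 0)) by auto. induction n; simpl; [lra|]. rewrite IHn by (intros; apply H; lia). lra. Qed.

Lemma rsum_swap n m f : rsum n (fun i => rsum m (fun j => f i j)) = rsum m (fun j => rsum n (fun i => f i j)).
Proof. induction n; simpl. { symmetry; apply rsum_zero; auto. } rewrite IHn. rewrite <- rsum_plus. reflexivity. Qed.

Lemma rsum_nonneg n f : (forall k, (k < n)%nat -> 0 <= f k) -> 0 <= rsum n f.
Proof. induction n; simpl; intros H; [lra|]. pose proof (H n ltac:(lia)). pose proof (IHn ltac:(intros; apply H; lia)). lra. Qed.

Lemma rsum_le n f g : (forall k, (k < n)%nat -> f k <= g k) -> rsum n f <= rsum n g.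
Proof. induction n; simpl; intros H; [lra|]. pose proof (H n ltac:(lia)). pose proof (IHn ltac:(intros; apply H; lia)). lra. Qed.

Lemma rsum_abs n f : Rabs (rsum n f) <= rsum n (fun k => Rabs (f k)).
Proof. induction n; simpl. { rewrite Rabs_R0; lra. } eapply Rle_trans; [apply Rabs_triang|]. lra. Qed.

Lemma rsum_term n f k : (forall k, (k < n)%nat -> 0 <= f k) -> (k < n)%nat -> f k <= rsum n f.
Proof. induction n; simpl; intros H Hk; [lia|]. destruct (Nat.eq_dec k n).
 - subst. pose proof (rsum_nonneg n f ltac:(intros; apply H; lia)). lra.
 - pose proof (IHn ltac:(intros; apply H; lia) ltac:(lia)). pose proof (H n ltac:(lia)). lra. Qed.

Lemma rsum_single n i x f : (i < n)%nat -> (forall k, (k < n)%nat -> k <> i -> f k = 0) -> f i = x -> rsum n f = x.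
Proof. induction n; simpl; intros Hi H Hx; [lia|]. destruct (Nat.eq_dec i n).
 - subst. rewrite rsum_zero by (intros; apply H; lia). lra.
 - rewrite IHn by (auto; lia). rewrite H by lia. lra. Qed.

Lemma rsum_sum_f N f : rsum (S N) f = sum_f_R0 f N.
Proof. induction N; simpl; [lra|]. simpl in IHN. rewrite <- IHN. reflexivity. Qed.

Lemma rsum_S_l n f : rsum (S n) f = f 0%nat + rsum n (fun k => f (S k)).
Proof. induction n; simpl in *; [lra|]. rewrite IHn. lra. Qed.

Lemma rsum_rev n f : rsum n f = rsum n (fun i => f (n - S i)%nat).
Proof. induction n; [reflexivity|]. change (rsum (S n) f) with (rsum n f + f n). rewrite rsum_S_l. rewrite IHn.
 replace (S n - 1)%nat with n by lia. 
 rewrite (rsum_ext n (fun k => f (S n - S (S k))%nat) (fun i => f (n - S i)%nat)) by (intros; f_equal; lia). lra. Qed.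

Lemma rsum_extend k N f : (k <= N)%nat -> (forall i, (k <= i < N)%nat -> f i = 0) -> rsum k f = rsum N f.
Proof. intros Hk H. induction N. { replace k with 0%nat by lia. reflexivity. }
 destruct (Nat.eq_dec k (S N)). { subst; reflexivity. }
 simpl. rewrite <- IHN by (lia || (intros; apply H; lia)). rewrite H by lia. lra. Qed.

Lemma rsum_tri N a : (forall n m, (m < n)%nat -> a n m = 0) ->
  rsum N (fun m => rsum (S m) (fun n => a n m)) = rsum N (fun n => rsum N (fun m => a n m)).
Proof. intros H. rewrite <- rsum_swap. apply rsum_ext. intros m Hm.
 apply rsum_extend; [lia|]. intros; apply H; lia. Qed.

Lemma is_ext a b l : (forall n, a n = b n) -> infinite_sum a l -> infinite_sum b l.
Proof. intros H Ha eps He. destruct (Ha eps He) as [N HN]. exists N. intros n Hn.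
 replace (sum_f_R0 b n) with (sum_f_R0 a n). { apply HN; auto. }
 induction n; simpl; rewrite H; [reflexivity|]. destruct (le_lt_dec N n).
 - rewrite IHn; auto.
 - f_equal. clear -H. induction n; simpl; rewrite H; [reflexivity|]. rewrite IHn; reflexivity. Qed.

Lemma sum_f_ext a b N : (forall n, a n = b n) -> sum_f_R0 a N = sum_f_R0 b N.
Proof. intros H. induction N; simpl; rewrite H; [reflexivity|]. rewrite IHN; reflexivity. Qed.

Lemma is_plus a b la lb : infinite_sum a la -> infinite_sum b lb -> infinite_sum (fun n => a n + b n) (la + lb).
Proof. intros Ha Hb. pose proof (CV_plus _ _ _ _ Ha Hb) as H.
 intros eps He. destruct (H eps He) as [N HN]. exists N. intros n Hn. rewrite plus_sum. apply HN; auto. Qed.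

Lemma is_scal c a l : infinite_sum a l -> infinite_sum (fun n => c * a n) (c * l).
Proof. intros Ha. assert (Hc : Un_cv (fun _ => c) c). { intros eps He; exists 0%nat; intros; unfold Rdist; rewrite Rminus_diag, Rabs_R0; lra. }
 pose proof (CV_mult _ _ _ _ Hc Ha) as H.
 intros eps He. destruct (H eps He) as [N HN]. exists N. intros n Hn.
 replace (sum_f_R0 (fun n => c * a n) n) with (c * sum_f_R0 a n). { apply HN; auto. }
 rewrite scal_sum. apply sum_f_ext. intros; lra. Qed.

Lemma is_zero : infinite_sum (fun _ => 0) 0.
Proof. intros eps He; exists 0%nat; intros n _. replace (sum_f_R0 (fun _ => 0) n) with 0.
 { unfold Rdist; rewrite Rminus_diag, Rabs_R0; lra. } induction n; simpl; lra. Qed.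

Lemma is_rsum K f l : (forall i, (i < K)%nat -> infinite_sum (f i) (l i)) ->
  infinite_sum (fun n => rsum K (fun i => f i n)) (rsum K l).
Proof. induction K; simpl; intros H. { apply is_zero. }
 apply is_plus; auto. Qed.

Lemma is_single u m : (forall n, n <> m -> u n = 0) -> infinite_sum u (u m).
Proof. intros H eps He. exists m. intros n Hn. replace (sum_f_R0 u n) with (u m).
 { unfold Rdist; rewrite Rminus_diag, Rabs_R0; lra. }
 rewrite <- rsum_sum_f. symmetry. apply (rsum_single _ m); auto; lia. Qed.

Lemma is_uniq a l1 l2 : infinite_sum a l1 -> infinite_sum a l2 -> l1 = l2.
Proof. apply uniqueness_sum. Qed.

Lemma is_partial_le a l N : (forall n, 0 <= a n) -> infinite_sum a l -> sum_f_R0 a N <= l.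
Proof. intros H Ha. apply sum_incr; auto. Qed.

Lemma is_le a b la lb : (forall n, a n <= b n) -> infinite_sum a la -> infinite_sum b lb -> la <= lb.
Proof. intros H Ha Hb. eapply Rle_cv_lim; [|exact Ha|exact Hb].
 intros N; apply sum_Rle; auto. Qed.

Lemma is_bounded a B : (forall n, 0 <= a n) -> (forall N, sum_f_R0 a N <= B) -> exists l, infinite_sum a l /\ l <= B.
Proof. intros H HB. destruct (growing_cv (fun N => sum_f_R0 a N)) as [l Hl].
 - intros n; simpl; pose proof (H (S n)); lra.
 - exists B; intros x [N ->]; apply HB.
 - exists l; split; [exact Hl|]. eapply Rle_cv_lim; [|exact Hl|]; [intros N; apply HB|].
   intros eps He; exists 0%nat; intros; unfold Rdist; rewrite Rminus_diag, Rabs_R0; lra. Qed.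

Lemma is_cmp a b lb : (forall n, Rabs (a n) <= b n) -> infinite_sum b lb ->
  exists la, infinite_sum a la /\ Rabs la <= lb.
Proof. intros H Hb.
 assert (Hex : @Coquelicot.Series.ex_series Coquelicot.Hierarchy.R_AbsRing Coquelicot.Hierarchy.R_NormedModule a).
 { apply Coquelicot.Series.ex_series_Rabs. apply (Coquelicot.Series.ex_series_le (K:=Coquelicot.Hierarchy.R_AbsRing) (V:=Coquelicot.Hierarchy.R_CompleteNormedModule) _ b).
   - intros n. unfold Coquelicot.Hierarchy.norm; simpl. unfold Coquelicot.Hierarchy.abs; simpl. rewrite Rabs_Rabsolu. apply H.
   - exists lb. apply Coquelicot.Series.is_series_Reals. exact Hb. }
 destruct Hex as [la Hla]. apply Coquelicot.Series.is_series_Reals in Hla. exists la. split; auto.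
 pose proof (cv_cvabs _ _ Hla) as H1. eapply Rle_cv_lim; [|exact H1|exact Hb].
 intros N; simpl. eapply Rle_trans; [apply Rabs_triang_gen|]. apply sum_Rle; auto. Qed.

Lemma is_cauchy a b la lb : infinite_sum a la -> infinite_sum b lb ->
  (exists l, infinite_sum (fun n => Rabs (a n)) l) -> (exists l, infinite_sum (fun n => Rabs (b n)) l) ->
  infinite_sum (fun n => sum_f_R0 (fun k => a k * b (n - k)%nat) n) (la * lb).
Proof. intros Ha Hb [l1 H1] [l2 H2]. apply Coquelicot.Series.is_series_Reals.
 apply Coquelicot.Series.is_series_mult.
 - apply Coquelicot.Series.is_series_Reals; auto.
 - apply Coquelicot.Series.is_series_Reals; auto.
 - exists l1. apply Coquelicot.Series.is_series_Reals; auto.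
 - exists l2. apply Coquelicot.Series.is_series_Reals; auto. Qed.

Lemma unif_N (P : nat -> nat -> Prop) K : (forall n, (n <= K)%nat -> exists N, forall M, (M >= N)%nat -> P n M) ->
  exists N, forall n M, (n <= K)%nat -> (M >= N)%nat -> P n M.
Proof. induction K; intros H.
 - destruct (H 0%nat ltac:(lia)) as [N HN]. exists N. intros n M Hn HM. replace n with 0%nat by lia. auto.
 - destruct IHK as [N1 H1]. { intros; apply H; lia. } destruct (H (S K) ltac:(lia)) as [N2 H2].
   exists (N1 + N2)%nat. intros n M Hn HM. destruct (Nat.eq_dec n (S K)). { subst; apply H2; lia. } apply H1; lia. Qed.

Lemma rsum_diff_le K N f h : (K <= N)%nat -> (forall n, (K <= n < N)%nat -> f n <= h n) ->
  rsum N f - rsum K f <= rsum N h - rsum K h.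
Proof. intros HK H. induction N. { replace K with 0%nat by lia. simpl; lra. }
 destruct (Nat.eq_dec K (S N)). { subst; lra. } simpl.
 pose proof (IHN ltac:(lia) ltac:(intros; apply H; lia)). pose proof (H N ltac:(lia)). lra. Qed.

Lemma TL (a b : nat -> nat -> R) F T :
 (forall n m, (m < n)%nat -> a n m = 0) -> (forall n m, Rabs (a n m) <= b n m) ->
 (forall n, infinite_sum (a n) (F n)) -> (forall n, infinite_sum (b n) (T n)) -> (exists L, infinite_sum T L) ->
 exists G, infinite_sum F G /\ infinite_sum (fun m => sum_f_R0 (fun n => a n m) m) G.
Proof. intros Hz Hab Ha Hb [L HL].
 assert (HFT : forall n, Rabs (F n) <= T n).
 { intros n. pose proof (cv_cvabs _ _ (Ha n)) as H1. eapply Rle_cv_lim; [|exact H1|exact (Hb n)].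
   intros N; simpl. eapply Rle_trans; [apply Rabs_triang_gen|]. apply sum_Rle; auto. }
 destruct (is_cmp F T L HFT HL) as [G [HG _]]. exists G. split; [exact HG|].
 assert (Hbpos : forall n m, 0 <= b n m). { intros n m. pose proof (Hab n m). pose proof (Rabs_pos (a n m)). lra. }
 assert (Htail : forall n N, Rabs (F n - sum_f_R0 (a n) N) <= T n - sum_f_R0 (b n) N).
 { intros n N. apply (sum_maj1 (fun k _ => a n k) (b n) 0 (F n) (T n) N).
   - exact (Ha n). - exact (Hb n). - intros k; apply Hab. }
 assert (HT0 : forall n, 0 <= T n). { intros n. pose proof (HFT n). pose proof (Rabs_pos (F n)). lra. }
 assert (HE : forall eps, eps > 0 -> exists N0, forall N, (N >= N0)%nat ->
            rsum (S N) (fun n => T n - sum_f_R0 (b n) N) < eps).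
 { intros eps He. destruct (HL (eps/4) ltac:(lra)) as [K HK].
   destruct (unif_N (fun n M => T n - sum_f_R0 (b n) M < eps / (4 * INR (S K))) K) as [N0 HN0].
   { intros n _. assert (Hp : 0 < eps / (4 * INR (S K))).
     { apply Rdiv_lt_0_compat; [lra|]. pose proof (lt_0_INR (S K) ltac:(lia)); lra. }
     destruct (Hb n _ Hp) as [N HN]. exists N. intros M HM. specialize (HN M HM). unfold Rdist in HN.
     pose proof (Rabs_def2 _ _ HN). lra. }
   exists (N0 + K)%nat. intros N HN.
   set (g := fun n => T n - sum_f_R0 (b n) N).
   assert (Hg0 : forall n, 0 <= g n). { intros n. unfold g. pose proof (Htail n N). pose proof (Rabs_pos (F n - sum_f_R0 (a n) N)). lra. }
   assert (H1 : rsum (S K) g <= INR (S K) * (eps / (4 * INR (S K)))).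
   { clear HK. assert (Hle : forall k, (k <= S K)%nat -> rsum k g <= INR k * (eps / (4 * INR (S K)))).
     { induction k; intros Hk; simpl rsum. { simpl; lra. } rewrite S_INR.
       pose proof (IHk ltac:(lia)). assert (g k < eps / (4 * INR (S K))) by (apply HN0; lia). lra. }
     apply Hle; lia. }
   assert (H1' : INR (S K) * (eps / (4 * INR (S K))) = eps / 4).
   { field. pose proof (lt_0_INR (S K) ltac:(lia)); lra. }
   assert (H2 : rsum (S N) g - rsum (S K) g <= rsum (S N) T - rsum (S K) T).
   { apply rsum_diff_le; [lia|]. intros n _. pose proof (Hg0 n). unfold g. 
     assert (0 <= sum_f_R0 (b n) N) by (apply cond_pos_sum; auto). lra. }
   pose proof (HK N ltac:(lia)) as HKN. pose proof (HK K ltac:(lia)) as HKK.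
   rewrite <- rsum_sum_f in HKN, HKK. unfold Rdist in HKN, HKK.
   pose proof (Rabs_def2 _ _ HKN). pose proof (Rabs_def2 _ _ HKK). lra. }
 intros eps He. destruct (HE (eps/2) ltac:(lra)) as [N1 HN1]. destruct (HG (eps/2) ltac:(lra)) as [N2 HN2].
 exists (N1 + N2)%nat. intros N HN.
 assert (Heq : sum_f_R0 (fun m => sum_f_R0 (fun n => a n m) m) N = rsum (S N) (fun n => sum_f_R0 (a n) N)).
 { rewrite <- rsum_sum_f. rewrite (rsum_ext _ _ (fun m => rsum (S m) (fun n => a n m))) by (intros; rewrite rsum_sum_f; reflexivity).
   rewrite rsum_tri by auto. apply rsum_ext. intros; rewrite rsum_sum_f; reflexivity. }
 rewrite Heq. specialize (HN1 N ltac:(lia)). specialize (HN2 N ltac:(lia)). unfold Rdist in *.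
 rewrite <- rsum_sum_f in HN2.
 assert (Hd : Rabs (rsum (S N) (fun n => sum_f_R0 (a n) N) - rsum (S N) F) <= rsum (S N) (fun n => T n - sum_f_R0 (b n) N)).
 { replace (rsum (S N) (fun n => sum_f_R0 (a n) N) - rsum (S N) F) with (rsum (S N) (fun n => sum_f_R0 (a n) N - F n)).
   2:{ unfold Rminus. rewrite rsum_plus. f_equal. 
       replace (- rsum (S N) F) with (-1 * rsum (S N) F) by ring. rewrite <- rsum_scal. apply rsum_ext; intros; ring. }
   eapply Rle_trans; [apply rsum_abs|]. apply rsum_le. intros n _. rewrite Rabs_minus_sym. apply Htail. }
 replace (rsum (S N) (fun n => sum_f_R0 (a n) N) - G) with ((rsum (S N) (fun n => sum_f_R0 (a n) N) - rsum (S N) F) + (rsum (S N) F - G)) by ring.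
 eapply Rle_lt_trans; [apply Rabs_triang|]. lra. Qed.


Definition lsum {X} (l : list X) (f : X -> R) : R := fold_right Rplus 0 (map f l).

Lemma lsum_nil {X} f : @lsum X [] f = 0. Proof. reflexivity. Qed.
Lemma lsum_cons {X} x l f : @lsum X (x :: l) f = f x + lsum l f. Proof. reflexivity. Qed.
Lemma lsum_app {X} l1 l2 f : @lsum X (l1 ++ l2) f = lsum l1 f + lsum l2 f.
Proof. induction l1; simpl; [rewrite lsum_nil; lra|]. rewrite !lsum_cons, IHl1. lra. Qed.
Lemma lsum_ext_in {X} l f g : (forall x, In x l -> f x = g x) -> @lsum X l f = lsum l g.
Proof. induction l; intros H; [reflexivity|]. rewrite !lsum_cons. rewrite H by (left; auto). rewrite IHl; auto.
 intros; apply H; right; auto. Qed.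
Lemma lsum_ext {X} l f g : (forall x, f x = g x) -> @lsum X l f = lsum l g.
Proof. intros; apply lsum_ext_in; auto. Qed.
Lemma lsum_plus {X} l f g : @lsum X l (fun x => f x + g x) = lsum l f + lsum l g.
Proof. induction l; [rewrite !lsum_nil; lra|]. rewrite !lsum_cons, IHl. lra. Qed.
Lemma lsum_scal {X} l c f : @lsum X l (fun x => c * f x) = c * lsum l f.
Proof. induction l; [rewrite !lsum_nil; lra|]. rewrite !lsum_cons, IHl. lra. Qed.
Lemma lsum_scal_r {X} l c f : @lsum X l (fun x => f x * c) = lsum l f * c.
Proof. induction l; [rewrite !lsum_nil; lra|]. rewrite !lsum_cons, IHl. lra. Qed.
Lemma lsum_zero {X} l f : (forall x, In x l -> f x = 0) -> @lsum X l f = 0.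
Proof. intros H. rewrite (lsum_ext_in l f (fun _ => 0)) by auto. induction l; [reflexivity|]. rewrite lsum_cons, IHl; [lra|].
 intros; apply H; right; auto. Qed.
Lemma lsum_swap {X Y} l1 l2 (f : X -> Y -> R) : lsum l1 (fun x => lsum l2 (fun y => f x y)) = lsum l2 (fun y => lsum l1 (fun x => f x y)).
Proof. induction l1; simpl. { rewrite lsum_nil. symmetry; apply lsum_zero; auto. }
 rewrite lsum_cons, IHl1. rewrite <- lsum_plus. apply lsum_ext; intros; rewrite lsum_cons; reflexivity. Qed.
Lemma lsum_rsum {X} l K (f : X -> nat -> R) : lsum l (fun x => rsum K (fun k => f x k)) = rsum K (fun k => lsum l (fun x => f x k)).
Proof. induction l. { rewrite lsum_nil. symmetry; apply rsum_zero; auto. }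
 rewrite lsum_cons, IHl. rewrite <- rsum_plus. apply rsum_ext; intros; rewrite lsum_cons; reflexivity. Qed.
Lemma lsum_abs {X} l f : Rabs (@lsum X l f) <= lsum l (fun x => Rabs (f x)).
Proof. induction l. { rewrite !lsum_nil, Rabs_R0; lra. } rewrite !lsum_cons. eapply Rle_trans; [apply Rabs_triang|]. lra. Qed.
Lemma lsum_le {X} l f g : (forall x, In x l -> f x <= g x) -> @lsum X l f <= lsum l g.
Proof. induction l; intros H. { rewrite !lsum_nil; lra. } rewrite !lsum_cons.
 pose proof (H a (or_introl eq_refl)). pose proof (IHl ltac:(intros; apply H; right; auto)). lra. Qed.
Lemma lsum_nonneg {X} l f : (forall x, In x l -> 0 <= f x) -> 0 <= @lsum X l f.
Proof. intros H. rewrite <- (lsum_zero l (fun _ => 0)) by auto. apply lsum_le; auto. Qed.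
Lemma lsum_flat_map {X Y} (g : X -> list Y) l f : lsum (flat_map g l) f = lsum l (fun x => lsum (g x) f).
Proof. induction l; [reflexivity|]. simpl. rewrite lsum_app, lsum_cons, IHl. reflexivity. Qed.
Lemma lsum_map {X Y} (h : X -> Y) l f : lsum (map h l) f = lsum l (fun x => f (h x)).
Proof. induction l; [reflexivity|]. simpl. rewrite !lsum_cons, IHl. reflexivity. Qed.
Lemma lsum_seq d f : lsum (seq 0 d) f = rsum d f.
Proof. induction d; [reflexivity|]. rewrite seq_S, lsum_app, IHd. simpl. rewrite lsum_cons, lsum_nil. lra. Qed.

Definition ws d n f := lsum (words d n) f.

Lemma words_len d n s : In s (words d n) -> length s = n.
Proof. revert s; induction n; simpl; intros s H. { destruct H as [<-|[]]; reflexivity. }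
 apply in_flat_map in H. destruct H as [w [Hw Hs]]. apply in_map_iff in Hs. destruct Hs as [c [<- _]]. simpl. f_equal; auto. Qed.

Lemma words_over d n s : In s (words d n) -> word_over d s.
Proof. revert s; induction n; simpl; intros s H. { destruct H as [<-|[]]. constructor. }
 apply in_flat_map in H. destruct H as [w [Hw Hs]]. apply in_map_iff in Hs. destruct Hs as [c [<- Hc]].
 apply in_seq in Hc. constructor; [lia|]. apply IHn; auto. Qed.

Lemma ws_0 d f : ws d 0 f = f [].
Proof. unfold ws; simpl. rewrite lsum_cons, lsum_nil. lra. Qed.

Lemma ws_S d m f : ws d (S m) f = rsum d (fun c => ws d m (fun w => f (c :: w))).
Proof. unfold ws; simpl. rewrite lsum_flat_map. rewrite <- lsum_seq. rewrite lsum_swap. apply lsum_ext. intros w.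
 rewrite lsum_map. reflexivity. Qed.

Lemma ws_add d a b f : ws d (a + b) f = ws d a (fun s1 => ws d b (fun s2 => f (s1 ++ s2))).
Proof. revert f; induction a; intros f. { simpl. rewrite ws_0. reflexivity. }
 simpl. rewrite !ws_S. apply rsum_ext. intros c _. rewrite IHa. reflexivity. Qed.

Lemma ws_ext d n f g : (forall s, length s = n -> word_over d s -> f s = g s) -> ws d n f = ws d n g.
Proof. intros H. apply lsum_ext_in. intros s Hs. apply H; [eapply words_len|eapply words_over]; eauto. Qed.

Lemma wsum_ij d n F i j : wsum d n F i j = ws d n (fun s => F s i j).
Proof. unfold wsum, ws, lsum. induction (words d n) as [|x l IH]; simpl; [reflexivity|]. unfold madd at 1. rewrite IH. reflexivity. Qed.


Definition Kap := list nat -> nat -> nat -> nat -> nat -> R.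
Definition Cs (D : nat) (κ : Kap) s (Q : Mat) : Mat :=
  fun i j => rsum D (fun k => rsum D (fun l => Q k l * κ s i j k l)).
Definition Lv d D (κ : Kap) (w : list nat -> R) n (Q : Mat) : Mat :=
  fun i j => ws d n (fun s => w s * Cs D κ s Q i j).
Definition SerCv d D κ w (F : Mat -> Mat) : Prop :=
  forall Q i j, (i < D)%nat -> (j < D)%nat -> infinite_sum (fun n => Lv d D κ w n Q i j) (F Q i j).
Definition Summable d (φ : list nat -> R) w : Prop :=
  exists l, infinite_sum (fun n => ws d n (fun s => w s * φ s)) l.
Definition good D (κ : Kap) (φ : list nat -> R) : Prop :=
  (forall s, 0 <= φ s) /\
  (forall s i j k l, (i < D)%nat -> (j < D)%nat -> (k < D)%nat -> (l < D)%nat -> Rabs (κ s i j k l) <= φ s) /\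
  (forall s, rsum D (fun i => rsum D (fun k => κ s i i k k)) = φ s).
Definition nonneg_w d (w : list nat -> R) := forall s, word_over d s -> 0 <= w s.

Lemma Cs_lin {X} D κ s (L : list X) g Y i j :
  Cs D κ s (fun k l => lsum L (fun t => g t * Y t k l)) i j = lsum L (fun t => g t * Cs D κ s (Y t) i j).
Proof. unfold Cs. 
 rewrite (rsum_ext _ _ (fun k => lsum L (fun t => rsum D (fun l => g t * Y t k l * κ s i j k l)))).
 2:{ intros k _. symmetry. rewrite lsum_rsum. apply rsum_ext. intros l _. rewrite <- lsum_scal_r. reflexivity. }
 symmetry. rewrite (lsum_ext L _ (fun t => rsum D (fun k => g t * rsum D (fun l => Y t k l * κ s i j k l)))).
 2:{ intros t. rewrite <- rsum_scal. reflexivity. }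
 rewrite lsum_rsum. apply rsum_ext. intros k _. apply lsum_ext. intros t. rewrite <- rsum_scal. apply rsum_ext. intros; ring. Qed.
Lemma dummy_cs : True. Proof. exact I. Qed.
Lemma dummy2 : True. Proof. exact I. Qed.

Lemma Lv_alpha d D κ u a X i j :
  Lv d D κ u a X i j = rsum D (fun k => rsum D (fun l => X k l * ws d a (fun s => u s * κ s i j k l))).
Proof. unfold Lv, Cs, ws. rewrite (lsum_ext _ _ (fun s => rsum D (fun k => rsum D (fun l => X k l * (u s * κ s i j k l))))).
 2:{ intros s. rewrite <- rsum_scal. apply rsum_ext; intros. rewrite <- rsum_scal. apply rsum_ext; intros. ring. }
 rewrite lsum_rsum. apply rsum_ext; intros. rewrite lsum_rsum. apply rsum_ext; intros. rewrite lsum_scal. reflexivity. Qed.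

Definition MQ D (Q : Mat) := rsum D (fun k => rsum D (fun l => Rabs (Q k l))).

Lemma MQ_pos D Q : 0 <= MQ D Q.
Proof. unfold MQ. apply rsum_nonneg; intros; apply rsum_nonneg; intros; apply Rabs_pos. Qed.

Lemma Cs_bound D κ φ s Q i j : good D κ φ -> (i < D)%nat -> (j < D)%nat -> Rabs (Cs D κ s Q i j) <= MQ D Q * φ s.
Proof. intros [H0 [Hb _]] Hi Hj. unfold Cs, MQ. eapply Rle_trans; [apply rsum_abs|].
 rewrite <- rsum_scal_r. apply rsum_le. intros k Hk. eapply Rle_trans; [apply rsum_abs|].
 rewrite <- rsum_scal_r. apply rsum_le. intros l Hl. rewrite Rabs_mult. apply Rmult_le_compat_l; [apply Rabs_pos|]. auto. Qed.

Lemma ws_abs_le d n f g : (forall s, word_over d s -> Rabs (f s) <= g s) -> Rabs (ws d n f) <= ws d n g.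
Proof. intros H. unfold ws. eapply Rle_trans; [apply lsum_abs|]. apply lsum_le. intros s Hs. apply H. eapply words_over; eauto. Qed.

Lemma ws_nonneg d n f : (forall s, word_over d s -> 0 <= f s) -> 0 <= ws d n f.
Proof. intros H. apply lsum_nonneg. intros s Hs. apply H. eapply words_over; eauto. Qed.

Lemma Lv_bound d D κ φ w n Q i j : good D κ φ -> nonneg_w d w -> (i < D)%nat -> (j < D)%nat ->
  Rabs (Lv d D κ w n Q i j) <= MQ D Q * ws d n (fun s => w s * φ s).
Proof. intros Hg Hw Hi Hj. unfold Lv. unfold ws at 2. rewrite <- lsum_scal. apply ws_abs_le. intros s Hs.
 rewrite Rabs_mult, Rabs_pos_eq by auto. pose proof (Cs_bound D κ φ s Q i j Hg Hi Hj). pose proof (Hw s Hs).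
 pose proof (MQ_pos D Q). pose proof (Rabs_pos (Cs D κ s Q i j)). nra. Qed.

Lemma alpha_bound d D κ φ u a i j k l : good D κ φ -> nonneg_w d u -> (i < D)%nat -> (j < D)%nat -> (k < D)%nat -> (l < D)%nat ->
  Rabs (ws d a (fun s => u s * κ s i j k l)) <= ws d a (fun s => u s * φ s).
Proof. intros [H0 [Hb _]] Hu Hi Hj Hk Hl. apply ws_abs_le. intros s Hs. rewrite Rabs_mult, Rabs_pos_eq by auto.
 apply Rmult_le_compat_l; auto. Qed.

Lemma Cs_mid D κ s i : (i < D)%nat -> Cs D κ s mid i i = rsum D (fun k => κ s i i k k).
Proof. intros Hi. unfold Cs. apply rsum_ext. intros k Hk. apply (rsum_single _ k); auto.
 - intros l _ Hl. unfold mid. destruct (Nat.eq_dec k l); [lia|]. ring.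
 - unfold mid. destruct (Nat.eq_dec k k); [ring|lia]. Qed.

Lemma trace_Lv d D κ φ w n : good D κ φ ->
  rsum D (fun i => Lv d D κ w n mid i i) = ws d n (fun s => w s * φ s).
Proof. intros [_ [_ Ht]]. unfold Lv, ws. rewrite <- lsum_rsum. apply lsum_ext. intros s. rewrite rsum_scal. f_equal.
 rewrite <- Ht. apply rsum_ext. intros i Hi. apply Cs_mid; auto. Qed.

Lemma SerCv_summable d D κ φ w F : good D κ φ -> SerCv d D κ w F -> Summable d φ w.
Proof. intros Hg HF. exists (rsum D (fun i => F mid i i)).
 eapply is_ext; [intros n; apply (trace_Lv d D κ φ w n Hg)|].
 apply is_rsum. intros i Hi. apply HF; auto. Qed.

Lemma SerCv_ext d D κ w F G : (forall Q i j, (i < D)%nat -> (j < D)%nat -> F Q i j = G Q i j) -> SerCv d D κ w F -> SerCv d D κ w G.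
Proof. intros H HF Q i j Hi Hj. rewrite <- H by auto. apply HF; auto. Qed.

Lemma SerCv_wext d D κ w v F : (forall s, word_over d s -> w s = v s) -> SerCv d D κ w F -> SerCv d D κ v F.
Proof. intros H HF Q i j Hi Hj. eapply is_ext; [|apply HF; auto]. intros n. unfold Lv. apply ws_ext. intros s _ Hs. rewrite H; auto. Qed.

Lemma G1 d D κ w : (forall Q i j, (i < D)%nat -> (j < D)%nat -> Cs D κ [] Q i j = Q i j) ->
  w [] = 1 -> (forall s, s <> [] -> w s = 0) -> SerCv d D κ w (fun Q => Q).
Proof. intros Hid H1 H0 Q i j Hi Hj.
 replace (Q i j) with (Lv d D κ w 0 Q i j).
 2:{ unfold Lv. rewrite ws_0, H1, Hid by auto. ring. }
 apply (is_single (fun n => Lv d D κ w n Q i j) 0). intros n Hn. unfold Lv. destruct n; [lia|]. unfold ws. apply lsum_zero. intros s Hs.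
 apply words_len in Hs. rewrite H0; [ring|]. intros ->. discriminate. Qed.

Lemma ex_Series a l : infinite_sum a l -> Coquelicot.Series.Series a = l.
Proof. intros H. apply Coquelicot.Series.is_series_unique. apply Coquelicot.Series.is_series_Reals. exact H. Qed.

Lemma rsum_sumf_swap D n (f : nat -> nat -> R) : sum_f_R0 (fun a => rsum D (fun k => f a k)) n = rsum D (fun k => sum_f_R0 (fun a => f a k) n).
Proof. rewrite <- rsum_sum_f. rewrite rsum_swap. apply rsum_ext. intros; apply rsum_sum_f. Qed.

Lemma G2 d D κ φ u v z F1 F2 : good D κ φ -> nonneg_w d u -> nonneg_w d v ->
  SerCv d D κ u F1 -> SerCv d D κ v F2 ->
  (forall n Q i j, (i < D)%nat -> (j < D)%nat ->
      Lv d D κ z n Q i j = sum_f_R0 (fun a => Lv d D κ u a (Lv d D κ v (n - a) Q) i j) n) ->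
  SerCv d D κ z (fun Q => F1 (F2 Q)).
Proof. intros Hg Hu Hv H1 H2 HLI Q i j Hi Hj.
 destruct (SerCv_summable d D κ φ u F1 Hg H1) as [lu Hlu].
 destruct (SerCv_summable d D κ φ v F2 Hg H2) as [lv Hlv].
 set (α := fun k l a => ws d a (fun s => u s * κ s i j k l)).
 set (A := fun k l => Coquelicot.Series.Series (α k l)).
 assert (HA : forall k l, (k < D)%nat -> (l < D)%nat -> infinite_sum (α k l) (A k l) /\ exists m, infinite_sum (fun a => Rabs (α k l a)) m).
 { intros k l Hk Hl. assert (Hb : forall a, Rabs (α k l a) <= ws d a (fun s => u s * φ s)).
   { intros a; apply (alpha_bound d D κ φ); auto. }
   destruct (is_cmp _ _ _ Hb Hlu) as [la [Hla _]]. split. { unfold A. rewrite (ex_Series _ la); auto. }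
   destruct (is_cmp (fun a => Rabs (α k l a)) (fun a => ws d a (fun s => u s * φ s)) lu ltac:(intros; simpl; rewrite Rabs_Rabsolu; auto) Hlu) as [m [Hm _]]. exists m; auto. }
 set (X := F2 Q).
 assert (HB : forall k l, (k < D)%nat -> (l < D)%nat -> infinite_sum (fun b => Lv d D κ v b Q k l) (X k l) /\ exists m, infinite_sum (fun b => Rabs (Lv d D κ v b Q k l)) m).
 { intros k l Hk Hl. split. { apply H2; auto. }
   assert (Hb : forall b, Rabs (Rabs (Lv d D κ v b Q k l)) <= MQ D Q * ws d b (fun s => v s * φ s)).
   { intros b; rewrite Rabs_Rabsolu; apply (Lv_bound d D κ φ); auto. }
   destruct (is_cmp _ _ _ Hb (is_scal (MQ D Q) _ _ Hlv)) as [m [Hm _]]. exists m; auto. }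
 assert (HF1 : F1 X i j = rsum D (fun k => rsum D (fun l => X k l * A k l))).
 { apply (is_uniq (fun a => Lv d D κ u a X i j)); [apply H1; auto|].
   eapply is_ext. { intros a. symmetry. apply Lv_alpha. }
   apply is_rsum. intros k Hk. apply is_rsum. intros l Hl. apply is_scal. apply HA; auto. }
 simpl. fold X. rewrite HF1.
 assert (Hseq : forall n, rsum D (fun k => rsum D (fun l => sum_f_R0 (fun a => α k l a * Lv d D κ v (n-a) Q k l) n)) = Lv d D κ z n Q i j).
 { intros n. rewrite HLI by auto.
   rewrite (sum_f_ext _ (fun a => rsum D (fun k => rsum D (fun l => Lv d D κ v (n-a) Q k l * α k l a)))) by (intros; apply Lv_alpha).
   rewrite rsum_sumf_swap. apply rsum_ext; intros. rewrite rsum_sumf_swap. apply rsum_ext; intros. apply sum_f_ext; intros; ring. }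
 apply (is_ext _ _ _ Hseq).
 apply is_rsum. intros k Hk. apply is_rsum. intros l Hl.
 destruct (HA k l Hk Hl) as [HA1 HA2]. destruct (HB k l Hk Hl) as [HB1 HB2].
 replace (X k l * A k l) with (A k l * X k l) by ring.
 apply (is_cauchy (α k l) (fun b => Lv d D κ v b Q k l)); auto. Qed.


Lemma trace_series d D κ φ w F : good D κ φ -> SerCv d D κ w F ->
  infinite_sum (fun m => ws d m (fun s => w s * φ s)) (rsum D (fun i => F mid i i)).
Proof. intros Hg HF. eapply is_ext; [intros n; apply (trace_Lv d D κ φ w n Hg)|].
 apply is_rsum. intros i Hi. apply HF; auto. Qed.

Lemma rsum_le_mono k N f : (k <= N)%nat -> (forall i, (i < N)%nat -> 0 <= f i) -> rsum k f <= rsum N f.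
Proof. intros Hk H. induction N. { replace k with 0%nat by lia; lra. }
 destruct (Nat.eq_dec k (S N)). { subst; lra. } simpl. pose proof (IHN ltac:(lia) ltac:(intros; apply H; lia)).
 pose proof (H N ltac:(lia)). lra. Qed.

Definition Wst (p : nat -> list nat -> R) s := rsum (S (length s)) (fun n => p n s).

Lemma Lv_Wst d D κ p m Q i j : (forall n s, (length s < n)%nat -> p n s = 0) ->
  sum_f_R0 (fun n => Lv d D κ (p n) m Q i j) m = Lv d D κ (Wst p) m Q i j.
Proof. intros Hz. rewrite <- rsum_sum_f. unfold Lv, ws. rewrite <- lsum_rsum. apply lsum_ext_in.
 intros s Hs. apply words_len in Hs. unfold Wst. rewrite Hs. rewrite <- rsum_scal_r. reflexivity. Qed.

Lemma CoreStar d D κ φ p It : good D κ φ -> (forall n, nonneg_w d (p n)) ->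
  (forall n s, (length s < n)%nat -> p n s = 0) -> (forall n, SerCv d D κ (p n) (It n)) ->
  (exists L, infinite_sum (fun n => rsum D (fun i => It n mid i i)) L) ->
  forall Q i j, (i < D)%nat -> (j < D)%nat ->
  exists G, infinite_sum (fun n => It n Q i j) G /\ infinite_sum (fun m => Lv d D κ (Wst p) m Q i j) G.
Proof. intros Hg Hp Hz Hit [L HL] Q i j Hi Hj.
 destruct (TL (fun n m => Lv d D κ (p n) m Q i j) (fun n m => MQ D Q * ws d m (fun s => p n s * φ s))
              (fun n => It n Q i j) (fun n => MQ D Q * rsum D (fun i => It n mid i i))) as [G [HG1 HG2]].
 - intros n m Hnm. unfold Lv, ws. apply lsum_zero. intros s Hs. apply words_len in Hs. rewrite Hz by lia. ring.
 - intros n m. apply (Lv_bound d D κ φ); auto.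
 - intros n. apply Hit; auto.
 - intros n. apply is_scal. apply (trace_series d D κ φ); auto.
 - exists (MQ D Q * L). apply is_scal; auto.
 - exists G. split; auto. eapply is_ext; [|exact HG2]. intros m. apply Lv_Wst; auto. Qed.

Lemma G4a d D κ φ p It g : good D κ φ -> (forall n, nonneg_w d (p n)) ->
  (forall n s, (length s < n)%nat -> p n s = 0) -> (forall n, SerCv d D κ (p n) (It n)) ->
  (forall Q i j, (i < D)%nat -> (j < D)%nat -> infinite_sum (fun n => It n Q i j) (g Q i j)) ->
  SerCv d D κ (Wst p) g.
Proof. intros Hg Hp Hz Hit Hcv Q i j Hi Hj.
 destruct (CoreStar d D κ φ p It Hg Hp Hz Hit) with (Q := Q) (i := i) (j := j) as [G [H1 H2]]; auto.
 - exists (rsum D (fun i => g mid i i)). apply is_rsum. intros; apply Hcv; auto.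
 - rewrite (is_uniq _ _ _ (Hcv Q i j Hi Hj) H1). exact H2. Qed.

Lemma Lv_Wst_aux d p φ m : (forall n s, (length s < n)%nat -> p n s = 0) ->
  rsum (S m) (fun n => ws d m (fun s => p n s * φ s)) = ws d m (fun s => Wst p s * φ s).
Proof. intros Hz. unfold ws. rewrite <- lsum_rsum. apply lsum_ext_in.
 intros s Hs. apply words_len in Hs. unfold Wst. rewrite Hs. rewrite <- rsum_scal_r. reflexivity. Qed.

Lemma G4b d D κ φ p It : good D κ φ -> (forall n, nonneg_w d (p n)) ->
  (forall n s, (length s < n)%nat -> p n s = 0) -> (forall n, SerCv d D κ (p n) (It n)) ->
  Summable d φ (Wst p) ->
  forall Q i j, (i < D)%nat -> (j < D)%nat -> exists G, infinite_sum (fun n => It n Q i j) G.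
Proof. intros Hg Hp Hz Hit [SW HSW] Q i j Hi Hj.
 assert (Hgφ : forall s, 0 <= φ s) by apply Hg.
 assert (Hc0 : forall n m, 0 <= ws d m (fun s => p n s * φ s)).
 { intros; apply ws_nonneg; intros s Hs. pose proof (Hp n s Hs); pose proof (Hgφ s); nra. }
 assert (HW0 : forall m, 0 <= ws d m (fun s => Wst p s * φ s)).
 { intros; apply ws_nonneg; intros s Hs. unfold Wst. pose proof (Hgφ s).
   assert (0 <= rsum (S (length s)) (fun n => p n s)) by (apply rsum_nonneg; intros; apply Hp; auto). nra. }
 destruct (CoreStar d D κ φ p It Hg Hp Hz Hit) with (Q := Q) (i := i) (j := j) as [G [H1 H2]]; auto.
 2:{ exists G; auto. }
 destruct (is_bounded (fun n => rsum D (fun i => It n mid i i)) SW) as [L [HL _]]; [| |exists L; auto].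
 - intros n. pose proof (trace_series d D κ φ _ _ Hg (Hit n)) as Ht.
   eapply (is_le (fun _ => 0)); [|apply is_zero|exact Ht]. intros m; simpl; apply Hc0.
 - intros N. 
   assert (HlimN : infinite_sum (fun m => rsum (S N) (fun n => ws d m (fun s => p n s * φ s))) (rsum (S N) (fun n => rsum D (fun i => It n mid i i)))).
   { apply is_rsum. intros k _. apply (trace_series d D κ φ); auto. }
   rewrite <- rsum_sum_f. eapply Rle_cv_lim; [|exact HlimN|exact HSW]. intros M.
   rewrite <- !rsum_sum_f. apply rsum_le. intros m Hm.
   rewrite <- (Lv_Wst_aux d p φ m Hz). 
   destruct (le_lt_dec N m).
   + apply (rsum_le_mono (S N) (S m)); [lia|]. intros; auto.
   + rewrite (rsum_extend (S m) (S N) (fun n => ws d m (fun s => p n s * φ s))); [lra|lia|idtac]. intros n Hn. unfold ws. apply lsum_zero. intros s Hs.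
     apply words_len in Hs. rewrite Hz by lia. ring.
Qed.

Lemma G5 d D κ φ p It : good D κ φ -> (forall n, nonneg_w d (p n)) -> (forall n, SerCv d D κ (p n) (It n)) ->
  (forall Q i j, (i < D)%nat -> (j < D)%nat -> exists G, infinite_sum (fun n => It n Q i j) G) ->
  (forall n, 1 <= p n []) -> 0 < φ [] -> False.
Proof. intros Hg Hp Hit Hcv H1 Hφ.
 set (Sq := fun n => rsum D (fun i => It n mid i i)).
 assert (HS : infinite_sum Sq (rsum D (fun i => Coquelicot.Series.Series (fun n => It n mid i i)))).
 { apply is_rsum. intros i Hi. destruct (Hcv mid i i Hi Hi) as [G HG]. rewrite (ex_Series _ G); auto. }
 assert (HSge : forall n, φ [] <= Sq n).
 { intros n. pose proof (trace_series d D κ φ _ _ Hg (Hit n)) as Ht.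
   assert (Hnn : forall m, 0 <= ws d m (fun s => p n s * φ s)).
   { intros m; apply ws_nonneg; intros s Hs; pose proof (Hp n s Hs); pose proof (proj1 Hg s); nra. }
   pose proof (is_partial_le _ _ 0 Hnn Ht) as H.
   simpl in H. rewrite ws_0 in H. pose proof (H1 n). pose proof (proj1 Hg []). unfold Sq. nra. }
 destruct (INR_archimed (φ []) (rsum D (fun i => Coquelicot.Series.Series (fun n => It n mid i i)))) as [N HN]; [lra|].
 pose proof (is_partial_le Sq _ N ltac:(intros n; pose proof (HSge n); lra) HS) as HP.
 assert (Hlow : forall N, INR (S N) * φ [] <= sum_f_R0 Sq N).
 { induction N0. { simpl. pose proof (HSge 0%nat); lra. } 
   change (sum_f_R0 Sq (S N0)) with (sum_f_R0 Sq N0 + Sq (S N0)). rewrite (S_INR (S N0)). pose proof (HSge (S N0)). lra. }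
 pose proof (Hlow N). rewrite S_INR in H. lra. Qed.


Definition κr D A : Kap := fun s i j k l => Aword D A s i k * Aword D A s j l.
Definition κl D A : Kap := fun s i j k l => Aword D A s k i * Aword D A s l j.
Definition φA D A (s : list nat) := rsum D (fun i => rsum D (fun k => Aword D A s i k * Aword D A s i k)).

Lemma rsum_prod n m f g : rsum n f * rsum m g = rsum n (fun i => rsum m (fun j => f i * g j)).
Proof. rewrite <- rsum_scal_r. apply rsum_ext. intros. rewrite <- rsum_scal. reflexivity. Qed.

Lemma sq_le_φ D A s i k : (i < D)%nat -> (k < D)%nat -> Aword D A s i k * Aword D A s i k <= φA D A s.
Proof. intros Hi Hk. unfold φA.
 eapply Rle_trans; [| apply (rsum_term D _ i); [intros; apply rsum_nonneg; intros; nra|auto]].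
 apply (rsum_term D (fun k => Aword D A s i k * Aword D A s i k) k); auto. intros; nra. Qed.

Lemma abs_prod_le x y c : x * x <= c -> y * y <= c -> Rabs (x * y) <= c.
Proof. intros. rewrite Rabs_mult. pose proof (Rabs_pos x). pose proof (Rabs_pos y).
 assert (Rabs x * Rabs x = x * x) by (rewrite <- Rabs_mult; apply Rabs_pos_eq; nra).
 assert (Rabs y * Rabs y = y * y) by (rewrite <- Rabs_mult; apply Rabs_pos_eq; nra). nra. Qed.

Lemma good_r D A : good D (κr D A) (φA D A).
Proof. split; [|split].
 - intros s. unfold φA. apply rsum_nonneg; intros; apply rsum_nonneg; intros; nra.
 - intros s i j k l Hi Hj Hk Hl. unfold κr. apply abs_prod_le; apply sq_le_φ; auto.
 - intros s. reflexivity. Qed.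

Lemma good_l D A : good D (κl D A) (φA D A).
Proof. split; [|split].
 - intros s. unfold φA. apply rsum_nonneg; intros; apply rsum_nonneg; intros; nra.
 - intros s i j k l Hi Hj Hk Hl. unfold κl. apply abs_prod_le; apply sq_le_φ; auto.
 - intros s. unfold κl, φA. apply rsum_swap. Qed.

Lemma rsum_const n c : rsum n (fun _ => c) = INR n * c.
Proof. induction n; simpl rsum; [simpl; ring|]. rewrite IHn, S_INR. ring. Qed.

Lemma φA_nil D A : φA D A [] = INR D.
Proof. unfold φA. simpl. rewrite (rsum_ext D _ (fun _ => 1)). { rewrite rsum_const; ring. }
 intros i Hi. apply (rsum_single _ i); auto.
 - intros k _ Hk. unfold mid. destruct (Nat.eq_dec i k); [lia|]. ring.
 - unfold mid. destruct (Nat.eq_dec i i); [ring|lia]. Qed.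

Lemma Aw_app D A s1 s2 i k : (i < D)%nat -> Aword D A (s1 ++ s2) i k = rsum D (fun m => Aword D A s1 i m * Aword D A s2 m k).
Proof. revert i k. induction s1 as [|c s1 IH]; intros i k Hi.
 - simpl. symmetry. apply (rsum_single _ i); auto.
   + intros m _ Hm. unfold mid. destruct (Nat.eq_dec i m); [lia|]. ring.
   + unfold mid. destruct (Nat.eq_dec i i); [ring|lia].
 - simpl. unfold mmul at 1. rewrite (rsum_ext _ _ (fun m => A c i m * rsum D (fun m' => Aword D A s1 m m' * Aword D A s2 m' k))) by (intros; rewrite IH; auto).
   unfold mmul. rewrite (rsum_ext _ (fun m => rsum D (fun k0 => A c i k0 * Aword D A s1 k0 m) * Aword D A s2 m k)
        (fun m => rsum D (fun k0 => A c i k0 * Aword D A s1 k0 m * Aword D A s2 m k))) by (intros; rewrite <- rsum_scal_r; reflexivity).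
   rewrite rsum_swap. apply rsum_ext. intros m _. rewrite <- rsum_scal. apply rsum_ext; intros; ring. Qed.

Lemma rsum4_swap n f : rsum n (fun a => rsum n (fun b => rsum n (fun c => rsum n (fun d => f a b c d)))) =
  rsum n (fun c => rsum n (fun d => rsum n (fun a => rsum n (fun b => f a b c d)))).
Proof.
 rewrite (rsum_ext n _ (fun a => rsum n (fun c => rsum n (fun b => rsum n (fun d => f a b c d))))).
 2:{ intros a _. rewrite rsum_swap. reflexivity. }
 rewrite rsum_swap. apply rsum_ext. intros c _.
 rewrite (rsum_ext n _ (fun a => rsum n (fun d => rsum n (fun b => f a b c d)))) by (intros; apply rsum_swap).
 apply rsum_swap. Qed.

Lemma Cs_comp D κ s t u Q i j : (i < D)%nat -> (j < D)%nat ->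
  (forall k l, (k < D)%nat -> (l < D)%nat -> κ u i j k l = rsum D (fun k' => rsum D (fun l' => κ s i j k' l' * κ t k' l' k l))) ->
  Cs D κ s (Cs D κ t Q) i j = Cs D κ u Q i j.
Proof. intros Hi Hj H. unfold Cs.
 rewrite (rsum_ext D (fun k => rsum D (fun l => Q k l * κ u i j k l))
   (fun k => rsum D (fun l => rsum D (fun k' => rsum D (fun l' => Q k l * κ s i j k' l' * κ t k' l' k l))))).
 2:{ intros k Hk. apply rsum_ext. intros l Hl. rewrite H by auto. rewrite <- rsum_scal. apply rsum_ext; intros.
     rewrite <- rsum_scal. apply rsum_ext; intros; ring. }
 rewrite (rsum_ext D _ (fun k' => rsum D (fun l' => rsum D (fun k => rsum D (fun l => Q k l * κ s i j k' l' * κ t k' l' k l))))).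
 2:{ intros k' _. apply rsum_ext. intros l' _. rewrite <- rsum_scal_r. apply rsum_ext; intros. rewrite <- rsum_scal_r. apply rsum_ext; intros; ring. }
 apply rsum4_swap. Qed.

Lemma Cs_comp_r D A s1 s2 Q i j : (i < D)%nat -> (j < D)%nat ->
  Cs D (κr D A) s1 (Cs D (κr D A) s2 Q) i j = Cs D (κr D A) (s1 ++ s2) Q i j.
Proof. intros Hi Hj. apply Cs_comp; auto. intros k l Hk Hl. unfold κr.
 rewrite !Aw_app by auto. rewrite rsum_prod. apply rsum_ext; intros; apply rsum_ext; intros; ring. Qed.

Lemma Cs_comp_l D A s1 s2 Q i j : (i < D)%nat -> (j < D)%nat ->
  Cs D (κl D A) s2 (Cs D (κl D A) s1 Q) i j = Cs D (κl D A) (s1 ++ s2) Q i j.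
Proof. intros Hi Hj. apply Cs_comp; auto. intros k l Hk Hl. unfold κl.
 rewrite !Aw_app by auto. rewrite rsum_prod. apply rsum_ext; intros; apply rsum_ext; intros; ring. Qed.

Lemma Cs_nil_r D A Q i j : (i < D)%nat -> (j < D)%nat -> Cs D (κr D A) [] Q i j = Q i j.
Proof. intros Hi Hj. unfold Cs, κr. simpl. apply (rsum_single _ i); auto.
 - intros k _ Hk. apply rsum_zero. intros l _. unfold mid. destruct (Nat.eq_dec i k); [lia|]. ring.
 - apply (rsum_single _ j); auto.
   + intros l _ Hl. unfold mid. destruct (Nat.eq_dec j l); [lia|]. ring.
   + unfold mid. destruct (Nat.eq_dec i i); [|lia]. destruct (Nat.eq_dec j j); [ring|lia]. Qed.

Lemma Cs_nil_l D A Q i j : (i < D)%nat -> (j < D)%nat -> Cs D (κl D A) [] Q i j = Q i j.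
Proof. intros Hi Hj. unfold Cs, κl. simpl. apply (rsum_single _ i); auto.
 - intros k _ Hk. apply rsum_zero. intros l _. unfold mid. destruct (Nat.eq_dec k i); [lia|]. ring.
 - apply (rsum_single _ j); auto.
   + intros l _ Hl. unfold mid. destruct (Nat.eq_dec l j); [lia|]. ring.
   + unfold mid. destruct (Nat.eq_dec i i); [|lia]. destruct (Nat.eq_dec j j); [ring|lia]. Qed.


Definition conv (u v : list nat -> R) (s : list nat) : R :=
  rsum (S (length s)) (fun a => u (firstn a s) * v (skipn a s)).

Lemma firstn_skipn_app (s1 s2 : list nat) a : length s1 = a -> firstn a (s1 ++ s2) = s1 /\ skipn a (s1 ++ s2) = s2.
Proof. revert a; induction s1 as [|x s1 IH]; intros a H; simpl in *; subst; simpl; auto.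
 destruct (IH (length s1) eq_refl) as [H1 H2]. rewrite H1, H2; auto. Qed.

Lemma ws_conv d u v n X : ws d n (fun s => conv u v s * X s) =
  sum_f_R0 (fun a => ws d a (fun s1 => u s1 * ws d (n - a) (fun s2 => v s2 * X (s1 ++ s2)))) n.
Proof. rewrite (ws_ext d n _ (fun s => rsum (S n) (fun a => u (firstn a s) * v (skipn a s) * X s))).
 2:{ intros s Hs _. unfold conv. rewrite Hs. rewrite rsum_scal_r. reflexivity. }
 unfold ws at 1. rewrite lsum_rsum. rewrite <- rsum_sum_f. apply rsum_ext. intros a Ha.
 - fold (ws d n (fun x => u (firstn a x) * v (skipn a x) * X x)).
   replace n with (a + (n - a))%nat at 1 by lia. rewrite ws_add.
   apply ws_ext. intros s1 Hs1 _. unfold ws at 2. rewrite <- lsum_scal. apply lsum_ext_in. intros s2 _.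
   destruct (firstn_skipn_app s1 s2 a Hs1) as [-> ->]. ring. Qed.

Lemma Cs_Lv d D κ s v b Q i j : Cs D κ s (Lv d D κ v b Q) i j = ws d b (fun t => v t * Cs D κ s (Cs D κ t Q) i j).
Proof. unfold Lv, ws. apply (Cs_lin D κ s (words d b) v (fun t => Cs D κ t Q)). Qed.

Lemma LI_r d D A u v n Q i j : (i < D)%nat -> (j < D)%nat ->
  Lv d D (κr D A) (conv u v) n Q i j = sum_f_R0 (fun a => Lv d D (κr D A) u a (Lv d D (κr D A) v (n - a) Q) i j) n.
Proof. intros Hi Hj. unfold Lv at 1. rewrite ws_conv. apply sum_f_ext. intros a.
 unfold Lv at 1. apply lsum_ext. intros s1. f_equal. rewrite Cs_Lv. apply lsum_ext. intros s2. rewrite Cs_comp_r; auto. Qed.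

Lemma LI_l d D A u v n Q i j : (i < D)%nat -> (j < D)%nat ->
  Lv d D (κl D A) (conv u v) n Q i j = sum_f_R0 (fun a => Lv d D (κl D A) v a (Lv d D (κl D A) u (n - a) Q) i j) n.
Proof. intros Hi Hj. unfold Lv at 1. rewrite ws_conv.
 rewrite <- !rsum_sum_f. rewrite rsum_rev. apply rsum_ext. intros a Ha.
 replace (S n - S a)%nat with (n - a)%nat by lia. replace (n - (n - a))%nat with a by lia.
 unfold ws. unfold Lv at 1.
 rewrite (lsum_ext (words d (n - a)) _ (fun s1 => u s1 * lsum (words d a) (fun s2 => v s2 * Cs D (κl D A) s2 (Cs D (κl D A) s1 Q) i j))).
 2:{ intros s1. f_equal. apply lsum_ext. intros s2. rewrite Cs_comp_l; auto. }
 rewrite (lsum_ext (words d (n - a)) _ (fun s1 => lsum (words d a) (fun s2 => v s2 * (u s1 * Cs D (κl D A) s2 (Cs D (κl D A) s1 Q) i j)))).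
 2:{ intros s1. rewrite <- lsum_scal. apply lsum_ext; intros; ring. }
 rewrite lsum_swap. apply lsum_ext. intros s2. rewrite lsum_scal. f_equal. unfold ws.
 symmetry. apply (Cs_lin D (κl D A) s2 (words d (n - a)) u (fun t => Cs D (κl D A) t Q)). Qed.


Definition fin_on d (c : list nat -> enat) := forall s, word_over d s -> c s <> None.

Lemma wo_firstn d s i : word_over d s -> word_over d (firstn i s).
Proof. unfold word_over. revert i; induction s as [|x s IH]; intros i H; destruct i; simpl; auto.
 inversion H; subst. constructor; auto. Qed.
Lemma wo_skipn d s i : word_over d s -> word_over d (skipn i s).
Proof. unfold word_over. revert i; induction s as [|x s IH]; intros i H; destruct i; simpl; auto.
 inversion H; subst. auto. Qed.

Definition ev (x : enat) : nat := match x with Some a => a | None => O end.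

Lemma coefR_ev x : coefR x = INR (ev x).
Proof. destruct x; reflexivity. Qed.

Lemma emul_some a b : emul (Some a) (Some b) = Some (a * b)%nat.
Proof. destruct a, b; simpl; try reflexivity; f_equal; lia. Qed.

Lemma fin_some (x : enat) : x <> None -> x = Some (ev x).
Proof. destruct x; simpl; congruence. Qed.

Fixpoint nsum (n : nat) (f : nat -> nat) : nat := match n with O => O | S m => (nsum m f + f m)%nat end.

Lemma esum_some n f : (forall i, (i < n)%nat -> f i <> None) -> esum n f = Some (nsum n (fun i => ev (f i))).
Proof. induction n; intros H; simpl; auto. rewrite IHn by (intros; apply H; lia).
 rewrite (fin_some (f n)) by (apply H; lia). reflexivity. Qed.

Lemma INR_nsum n f : INR (nsum n f) = rsum n (fun i => INR (f i)).
Proof. induction n; simpl nsum; simpl rsum; [reflexivity|]. rewrite plus_INR, IHn. reflexivity. Qed.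

Lemma esplit_fin d c1 c2 s : fin_on d c1 -> fin_on d c2 -> word_over d s ->
  esplit c1 c2 s <> None /\ coefR (esplit c1 c2 s) = conv (fun t => coefR (c1 t)) (fun t => coefR (c2 t)) s.
Proof. intros H1 H2 Hs. unfold esplit.
 assert (Hf : forall i, (i < S (length s))%nat -> emul (c1 (firstn i s)) (c2 (skipn i s)) = Some (ev (c1 (firstn i s)) * ev (c2 (skipn i s)))%nat).
 { intros i _. rewrite (fin_some (c1 _)) by (apply H1; apply wo_firstn; auto).
   rewrite (fin_some (c2 _)) by (apply H2; apply wo_skipn; auto). simpl ev. apply emul_some. }
 rewrite esum_some by (intros i Hi; rewrite Hf; auto; discriminate). split; [discriminate|].
 change (coefR (Some ?x)) with (INR x). rewrite INR_nsum. unfold conv. apply rsum_ext. intros i Hi. rewrite Hf by auto. simpl ev.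
 rewrite mult_INR, !coefR_ev. reflexivity. Qed.

Lemma eadd_fin x y : x <> None -> y <> None -> eadd x y <> None /\ coefR (eadd x y) = coefR x + coefR y.
Proof. destruct x, y; simpl; try congruence. intros. split; [discriminate|]. apply plus_INR. Qed.

Lemma pieces_fin d c : fin_on d c -> forall n, fin_on d (pieces c n).
Proof. intros Hc n; induction n; intros s Hs; simpl.
 - destruct s; discriminate.
 - apply (esplit_fin d c (pieces c n) s); auto. Qed.

Lemma pieces_nil c k n : c [] = Some k -> pieces c n [] = Some (k ^ n)%nat.
Proof. intros H. induction n; simpl; [reflexivity|]. unfold esplit. simpl. rewrite H, IHn, emul_some. reflexivity. Qed.

Lemma pieces_zero c : c [] = Some O -> forall n s, (length s < n)%nat -> pieces c n s = Some O.
Proof. intros H n; induction n; intros s Hs; [lia|]. simpl. unfold esplit.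
 rewrite (esum_some _ _ ). 
 2:{ intros i Hi. destruct i. { simpl. rewrite H. destruct (pieces c n s) as [[|]|]; discriminate. }
     rewrite IHn by (rewrite length_skipn; lia). destruct (c (firstn (S i) s)) as [[|]|]; discriminate. }
 f_equal. assert (Hz : forall m, (m <= S (length s))%nat -> nsum m (fun i => ev (emul (c (firstn i s)) (pieces c n (skipn i s)))) = O).
 { induction m; intros Hm; simpl; [reflexivity|]. rewrite IHm by lia. destruct m.
   - simpl. rewrite H. reflexivity.
   - rewrite IHn by (rewrite length_skipn; lia). destruct (c (firstn (S m) s)) as [[|]|]; reflexivity. }
 apply Hz; lia. Qed.

Definition ele_antisym x y : ele x y -> ele y x -> x = y.
Proof. destruct x, y; simpl; intros; try contradiction; auto. f_equal; lia. Qed.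

Lemma eseries_fin u N : (forall n, u n <> None) -> (forall n, (N <= n)%nat -> u n = Some O) ->
  eseries u = esum N u.
Proof. intros Hf Hz.
 assert (Hs : forall M, esum M u = Some (nsum M (fun i => ev (u i)))) by (intros; apply esum_some; auto).
 assert (Hmono : forall M, ele (esum M u) (esum N u)).
 { intros M. rewrite !Hs. simpl. destruct (le_lt_dec M N).
   - clear Hz. induction N. { replace M with 0%nat by lia. simpl; lia. }
     destruct (Nat.eq_dec M (S N)). { subst; lia. } simpl. specialize (IHN ltac:(lia)). lia.
   - induction M. { lia. } simpl. destruct (Nat.eq_dec M N). { subst. rewrite Hz by lia. simpl. lia. }
     specialize (IHM ltac:(lia)). rewrite Hz by lia. simpl. lia. }
 assert (Hsup : is_esup (fun M => esum M u) (esum N u)). { split; auto. }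
 unfold eseries. pose proof (epsilon_spec (inhabits None) (is_esup (fun M => esum M u)) (ex_intro _ _ Hsup)) as H.
 set (e := epsilon _ _) in *. apply ele_antisym.
 - apply H. apply Hsup.
 - apply Hsup. apply H. Qed.


Definition wR r s := coefR (cnt r s).
Definition pw r n s := coefR (pieces (cnt r) n s).

Lemma coefR_nonneg x : 0 <= coefR x.
Proof. destruct x; simpl; [apply pos_INR|lra]. Qed.

Lemma wR_nonneg d r : nonneg_w d (wR r).
Proof. intros s _; apply coefR_nonneg. Qed.
Lemma pw_nonneg d r n : nonneg_w d (pw r n).
Proof. intros s _; apply coefR_nonneg. Qed.

Lemma pw_S d r n s : fin_on d (cnt r) -> word_over d s -> pw r (S n) s = conv (wR r) (pw r n) s.
Proof. intros Hf Hs. unfold pw. simpl. apply (esplit_fin d); auto. apply pieces_fin; auto. Qed.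

Lemma pw_zero r : cnt r [] = Some O -> forall n s, (length s < n)%nat -> pw r n s = 0.
Proof. intros H n s Hs. unfold pw. rewrite pieces_zero; auto. Qed.

Lemma star_cnt d r s : fin_on d (cnt r) -> cnt r [] = Some O -> word_over d s ->
  cnt (RStar r) s <> None /\ wR (RStar r) s = Wst (pw r) s.
Proof. intros Hf H0 Hs. simpl. rewrite (eseries_fin _ (S (length s))).
 - rewrite esum_some by (intros i _; apply (pieces_fin d (cnt r) Hf); auto). split; [discriminate|].
   unfold wR; simpl. rewrite eseries_fin with (N := S (length s)).
   + rewrite esum_some by (intros i _; apply (pieces_fin d (cnt r) Hf); auto). change (coefR (Some ?x)) with (INR x). rewrite INR_nsum.
     unfold Wst, pw. apply rsum_ext. intros. rewrite coefR_ev. reflexivity.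
   + intros i; apply (pieces_fin d (cnt r) Hf); auto.
   + intros n Hn. apply pieces_zero; auto; lia.
 - intros i; apply (pieces_fin d (cnt r) Hf); auto.
 - intros n Hn. apply pieces_zero; auto; lia. Qed.

Lemma iter_succ_r {X} (f : X -> X) n x : Nat.iter (S n) f x = Nat.iter n f (f x).
Proof. induction n; simpl; auto. simpl in IHn. rewrite IHn. reflexivity. Qed.

Lemma pw_0_nil r : pw r 0 [] = 1. Proof. reflexivity. Qed.
Lemma pw_0_cons r s : s <> [] -> pw r 0 s = 0. Proof. destruct s; [congruence|]. reflexivity. Qed.

Lemma IterR d D A r f : fin_on d (cnt r) -> SerCv d D (κr D A) (wR r) f ->
  forall n, SerCv d D (κr D A) (pw r n) (Nat.iter n f).
Proof. intros Hf Hs n. induction n.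
 - apply (G1 d D (κr D A) (pw r 0)); [apply Cs_nil_r| apply pw_0_nil | apply pw_0_cons].
 - apply (G2 d D (κr D A) (φA D A) (wR r) (pw r n) (pw r (S n)) f (Nat.iter n f)); auto.
   + apply good_r. + apply wR_nonneg. + apply pw_nonneg.
   + intros m Q i j Hi Hj. rewrite <- LI_r by auto. unfold Lv. apply ws_ext. intros s _ Hso. rewrite (pw_S d); auto. Qed.

Lemma IterL d D A r f : fin_on d (cnt r) -> SerCv d D (κl D A) (wR r) f ->
  forall n, SerCv d D (κl D A) (pw r n) (Nat.iter n f).
Proof. intros Hf Hs n. induction n.
 - apply (G1 d D (κl D A) (pw r 0)); [apply Cs_nil_l| apply pw_0_nil | apply pw_0_cons].
 - eapply SerCv_ext; [intros Q i j _ _; symmetry; rewrite iter_succ_r; reflexivity|].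
   apply (G2 d D (κl D A) (φA D A) (pw r n) (wR r) (pw r (S n)) (Nat.iter n f) f); auto.
   + apply good_l. + apply pw_nonneg. + apply wR_nonneg.
   + intros m Q i j Hi Hj. rewrite <- LI_l by auto. unfold Lv. apply ws_ext. intros s _ Hso. rewrite (pw_S d); auto. Qed.


Lemma Un_cv_ext u v l : (forall n, u n = v n) -> Un_cv u l -> Un_cv v l.
Proof. intros H Hu eps He. destruct (Hu eps He) as [N HN]. exists N. intros n Hn. rewrite <- H. auto. Qed.

Lemma mser_iff D u L : mser_cv D u L <-> forall i j, (i < D)%nat -> (j < D)%nat -> infinite_sum (fun n => u n i j) (L i j).
Proof. unfold mser_cv. split; intros H i j Hi Hj; (eapply Un_cv_ext; [|apply H; auto]); intros n;
 first [apply rsum_sum_f | symmetry; apply rsum_sum_f]. Qed.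

Lemma StarZero d D A κ r f : (0 < D)%nat -> good D κ (φA D A) -> fin_on d (cnt r) ->
  (forall n, SerCv d D κ (pw r n) (Nat.iter n f)) ->
  (forall Q i j, (i < D)%nat -> (j < D)%nat -> exists G, infinite_sum (fun n => Nat.iter n f Q i j) G) ->
  cnt r [] = Some O.
Proof. intros HD Hg Hf Hit Hcv.
 assert (Hw : word_over d []) by constructor.
 destruct (cnt r []) as [[|k]|] eqn:E; [reflexivity| |exfalso; apply (Hf [] Hw); auto].
 exfalso. apply (G5 d D κ (φA D A) (fun n => pw r n) (fun n => Nat.iter n f) Hg); auto.
 - intros n; apply pw_nonneg.
 - intros n. unfold pw. rewrite (pieces_nil _ (S k)) by auto. simpl coefR. rewrite <- INR_1 at 1. apply le_INR.
   clear. induction n; simpl; [lia|]. nia.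
 - rewrite φA_nil. apply lt_0_INR; auto. Qed.

Lemma Star_fwd d D A κ r f g : good D κ (φA D A) -> fin_on d (cnt r) -> cnt r [] = Some O ->
  (forall n, SerCv d D κ (pw r n) (Nat.iter n f)) ->
  (forall Q i j, (i < D)%nat -> (j < D)%nat -> infinite_sum (fun n => Nat.iter n f Q i j) (g Q i j)) ->
  fin_on d (cnt (RStar r)) /\ SerCv d D κ (wR (RStar r)) g.
Proof. intros Hg Hf H0 Hit Hcv. split.
 - intros s Hs. apply (star_cnt d r s); auto.
 - apply (SerCv_wext d D κ (Wst (pw r))). { intros s Hs. symmetry. apply (star_cnt d r s); auto. }
   apply (G4a d D κ (φA D A) (fun n => pw r n) (fun n => Nat.iter n f)); auto.
   + intros n; apply pw_nonneg.
   + intros; apply pw_zero; auto. Qed.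

Lemma Star_bwd d D A κ r f : good D κ (φA D A) -> fin_on d (cnt r) -> cnt r [] = Some O ->
  (forall n, SerCv d D κ (pw r n) (Nat.iter n f)) ->
  Summable d (φA D A) (wR (RStar r)) ->
  exists g, forall Q, mser_cv D (fun n => Nat.iter n f Q) (g Q).
Proof. intros Hg Hf H0 Hit HS.
 exists (fun Q i j => Coquelicot.Series.Series (fun n => Nat.iter n f Q i j)). intros Q. apply mser_iff. intros i j Hi Hj.
 destruct (G4b d D κ (φA D A) (fun n => pw r n) (fun n => Nat.iter n f) Hg) with (Q := Q) (i := i) (j := j) as [G HG]; auto.
 - intros n; apply pw_nonneg.
 - intros; apply pw_zero; auto.
 - destruct HS as [l Hl]. exists l. eapply is_ext; [|exact Hl]. intros n. apply ws_ext. intros s _ Hs.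
   f_equal. apply (star_cnt d r s); auto.
 - rewrite (ex_Series _ G); auto. Qed.


Lemma conj_gen_r D M Q i j : mmul D (mmul D M Q) (mtr M) i j = rsum D (fun k => rsum D (fun l => Q k l * (M i k * M j l))).
Proof. unfold mmul, mtr. rewrite rsum_swap. apply rsum_ext. intros l _. rewrite <- rsum_scal_r. apply rsum_ext. intros; ring. Qed.
Lemma conj_gen_l D M Q i j : mmul D (mmul D (mtr M) Q) M i j = rsum D (fun k => rsum D (fun l => Q k l * (M k i * M l j))).
Proof. unfold mmul, mtr. rewrite rsum_swap. apply rsum_ext. intros l _. rewrite <- rsum_scal_r. apply rsum_ext. intros; ring. Qed.

Lemma conjR_Cs D A s Q i j : conjR D A s Q i j = Cs D (κr D A) s Q i j.
Proof. unfold conjR. rewrite conj_gen_r. reflexivity. Qed.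
Lemma conjL_Cs D A s Q i j : conjL D A s Q i j = Cs D (κl D A) s Q i j.
Proof. unfold conjL. rewrite conj_gen_l. reflexivity. Qed.

Lemma Aw_single D A c i k : (k < D)%nat -> Aword D A [c] i k = A c i k.
Proof. intros Hk. simpl. unfold mmul. apply (rsum_single _ k); auto.
 - intros m _ Hm. unfold mid. destruct (Nat.eq_dec m k); [lia|]. ring.
 - unfold mid. destruct (Nat.eq_dec k k); [ring|lia]. Qed.

Lemma chr_r D A c Q i j : mmul D (mmul D (A c) Q) (mtr (A c)) i j = Cs D (κr D A) [c] Q i j.
Proof. rewrite conj_gen_r. unfold Cs, κr. apply rsum_ext; intros k Hk; apply rsum_ext; intros l Hl.
 rewrite !Aw_single; auto. Qed.
Lemma chr_l D A c Q i j : (i < D)%nat -> (j < D)%nat -> mmul D (mmul D (mtr (A c)) Q) (A c) i j = Cs D (κl D A) [c] Q i j.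
Proof. intros Hi Hj. rewrite conj_gen_l. unfold Cs, κl. apply rsum_ext; intros k Hk; apply rsum_ext; intros l Hl.
 rewrite !Aw_single; auto. Qed.

Lemma ws_1 d f : ws d 1 f = rsum d (fun c => f [c]).
Proof. rewrite ws_S. apply rsum_ext. intros. rewrite ws_0. reflexivity. Qed.

Lemma chr_ser d D κ c : (c < d)%nat -> SerCv d D κ (wR (RChr c)) (fun Q => Cs D κ [c] Q).
Proof. intros Hc Q i j Hi Hj.
 replace (Cs D κ [c] Q i j) with (Lv d D κ (wR (RChr c)) 1 Q i j).
 2:{ unfold Lv. rewrite ws_1. apply (rsum_single _ c); auto.
     - intros c' _ Hc'. unfold wR. simpl. destruct (Nat.eq_dec c c'); [lia|]. simpl. ring.
     - unfold wR. simpl. destruct (Nat.eq_dec c c); [|lia]. simpl. ring. }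
 apply (is_single (fun n => Lv d D κ (wR (RChr c)) n Q i j) 1). intros n Hn. unfold Lv, ws. apply lsum_zero.
 intros s Hs. apply words_len in Hs. unfold wR. destruct s as [|x [|y s]]; simpl; try ring. simpl in Hs. lia. Qed.

Lemma Lv_plus d D κ u v n Q i j : Lv d D κ (fun s => u s + v s) n Q i j = Lv d D κ u n Q i j + Lv d D κ v n Q i j.
Proof. unfold Lv, ws. rewrite <- lsum_plus. apply lsum_ext. intros; ring. Qed.

Lemma Main_r d D A : (0 < D)%nat -> forall r f, ER D A r f -> regex_over d r ->
  fin_on d (cnt r) /\ SerCv d D (κr D A) (wR r) f.
Proof. intros HD r f H. induction H as [c|r1 r2 f1 f2 H1 IH1 H2 IH2|r1 r2 f1 f2 H1 IH1 H2 IH2|r f g H IH Hcv]; intros Hro; simpl in Hro.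
 - split. { intros s _. simpl. destruct s as [|x [|y s]]; try discriminate. destruct (Nat.eq_dec c x); discriminate. }
   eapply SerCv_ext; [|apply (chr_ser d D (κr D A) c Hro)]. intros Q i j _ _. simpl. symmetry. apply chr_r.
 - destruct Hro as [Ho1 Ho2]. destruct (IH1 Ho1) as [Hf1 Hs1]. destruct (IH2 Ho2) as [Hf2 Hs2]. split.
   + intros s Hs. apply (esplit_fin d (cnt r1) (cnt r2) s); auto.
   + apply (SerCv_wext d D _ (conv (wR r1) (wR r2))). { intros s Hs. symmetry. apply (esplit_fin d (cnt r1) (cnt r2) s); auto. }
     apply (G2 d D (κr D A) (φA D A) (wR r1) (wR r2) (conv (wR r1) (wR r2)) f1 f2); auto.
     * apply good_r. * apply wR_nonneg. * apply wR_nonneg.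
     * intros; apply LI_r; auto.
 - destruct Hro as [Ho1 Ho2]. destruct (IH1 Ho1) as [Hf1 Hs1]. destruct (IH2 Ho2) as [Hf2 Hs2]. split.
   + intros s Hs. apply (eadd_fin (cnt r1 s) (cnt r2 s)); auto.
   + apply (SerCv_wext d D _ (fun s => wR r1 s + wR r2 s)). { intros s Hs. symmetry. apply (eadd_fin (cnt r1 s) (cnt r2 s)); auto. }
     intros Q i j Hi Hj. eapply is_ext; [intros n; symmetry; apply Lv_plus|]. apply is_plus; auto.
 - destruct (IH Hro) as [Hf Hs].
   pose proof (IterR d D A r f Hf Hs) as Hit.
   assert (Hcv' : forall Q i j, (i < D)%nat -> (j < D)%nat -> infinite_sum (fun n => Nat.iter n f Q i j) (g Q i j)).
   { intros Q. apply mser_iff. apply Hcv. }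
   assert (H0 : cnt r [] = Some O).
   { apply (StarZero d D A (κr D A) r f HD (good_r D A) Hf Hit). intros Q i j Hi Hj. eexists; apply Hcv'; auto. }
   apply (Star_fwd d D A (κr D A) r f g (good_r D A) Hf H0 Hit Hcv'). Qed.

Lemma Main_l d D A : (0 < D)%nat -> forall r f, EL D A r f -> regex_over d r ->
  fin_on d (cnt r) /\ SerCv d D (κl D A) (wR r) f.
Proof. intros HD r f H. induction H as [c|r1 r2 f1 f2 H1 IH1 H2 IH2|r1 r2 f1 f2 H1 IH1 H2 IH2|r f g H IH Hcv]; intros Hro; simpl in Hro.
 - split. { intros s _. simpl. destruct s as [|x [|y s]]; try discriminate. destruct (Nat.eq_dec c x); discriminate. }
   eapply SerCv_ext; [|apply (chr_ser d D (κl D A) c Hro)]. intros Q i j Hi Hj. simpl. symmetry. apply chr_l; auto.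
 - destruct Hro as [Ho1 Ho2]. destruct (IH1 Ho1) as [Hf1 Hs1]. destruct (IH2 Ho2) as [Hf2 Hs2]. split.
   + intros s Hs. apply (esplit_fin d (cnt r1) (cnt r2) s); auto.
   + apply (SerCv_wext d D _ (conv (wR r1) (wR r2))). { intros s Hs. symmetry. apply (esplit_fin d (cnt r1) (cnt r2) s); auto. }
     apply (G2 d D (κl D A) (φA D A) (wR r2) (wR r1) (conv (wR r1) (wR r2)) f2 f1); auto.
     * apply good_l. * apply wR_nonneg. * apply wR_nonneg.
     * intros; apply LI_l; auto.
 - destruct Hro as [Ho1 Ho2]. destruct (IH1 Ho1) as [Hf1 Hs1]. destruct (IH2 Ho2) as [Hf2 Hs2]. split.
   + intros s Hs. apply (eadd_fin (cnt r1 s) (cnt r2 s)); auto.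
   + apply (SerCv_wext d D _ (fun s => wR r1 s + wR r2 s)). { intros s Hs. symmetry. apply (eadd_fin (cnt r1 s) (cnt r2 s)); auto. }
     intros Q i j Hi Hj. eapply is_ext; [intros n; symmetry; apply Lv_plus|]. apply is_plus; auto.
 - destruct (IH Hro) as [Hf Hs].
   pose proof (IterL d D A r f Hf Hs) as Hit.
   assert (Hcv' : forall Q i j, (i < D)%nat -> (j < D)%nat -> infinite_sum (fun n => Nat.iter n f Q i j) (g Q i j)).
   { intros Q. apply mser_iff. apply Hcv. }
   assert (H0 : cnt r [] = Some O).
   { apply (StarZero d D A (κl D A) r f HD (good_l D A) Hf Hit). intros Q i j Hi Hj. eexists; apply Hcv'; auto. }
   apply (Star_fwd d D A (κl D A) r f g (good_l D A) Hf H0 Hit Hcv'). Qed.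


Lemma Eq_rl d D A : (0 < D)%nat -> forall r f, ER D A r f -> regex_over d r -> exists g, EL D A r g.
Proof. intros HD r f H. induction H as [c|r1 r2 f1 f2 H1 IH1 H2 IH2|r1 r2 f1 f2 H1 IH1 H2 IH2|r f g H IH Hcv]; intros Hro.
 - eexists; apply EL_chr.
 - destruct Hro as [Ho1 Ho2]. destruct (IH1 Ho1) as [g1 G1]. destruct (IH2 Ho2) as [g2 G2]. eexists; apply EL_cat; eauto.
 - destruct Hro as [Ho1 Ho2]. destruct (IH1 Ho1) as [g1 G1]. destruct (IH2 Ho2) as [g2 G2]. eexists; apply EL_alt; eauto.
 - simpl in Hro. destruct (IH Hro) as [g' Hg'].
   destruct (Main_r d D A HD (RStar r) g (ER_star D A r f g H Hcv) Hro) as [_ HsS].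
   pose proof (SerCv_summable d D _ _ _ _ (good_r D A) HsS) as Hsum.
   destruct (Main_r d D A HD r f H Hro) as [Hf Hs].
   pose proof (IterR d D A r f Hf Hs) as Hit.
   assert (H0 : cnt r [] = Some O).
   { apply (StarZero d D A (κr D A) r f HD (good_r D A) Hf Hit). intros Q i j Hi Hj. eexists. apply (proj1 (mser_iff _ _ _) (Hcv Q)); auto. }
   destruct (Main_l d D A HD r g' Hg' Hro) as [_ Hsl].
   pose proof (IterL d D A r g' Hf Hsl) as Hitl.
   destruct (Star_bwd d D A (κl D A) r g' (good_l D A) Hf H0 Hitl Hsum) as [h Hh].
   exists h. apply (EL_star D A r g' h); auto. Qed.

Lemma Eq_lr d D A : (0 < D)%nat -> forall r f, EL D A r f -> regex_over d r -> exists g, ER D A r g.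
Proof. intros HD r f H. induction H as [c|r1 r2 f1 f2 H1 IH1 H2 IH2|r1 r2 f1 f2 H1 IH1 H2 IH2|r f g H IH Hcv]; intros Hro.
 - eexists; apply ER_chr.
 - destruct Hro as [Ho1 Ho2]. destruct (IH1 Ho1) as [g1 G1]. destruct (IH2 Ho2) as [g2 G2]. eexists; apply ER_cat; eauto.
 - destruct Hro as [Ho1 Ho2]. destruct (IH1 Ho1) as [g1 G1]. destruct (IH2 Ho2) as [g2 G2]. eexists; apply ER_alt; eauto.
 - simpl in Hro. destruct (IH Hro) as [g' Hg'].
   destruct (Main_l d D A HD (RStar r) g (EL_star D A r f g H Hcv) Hro) as [_ HsS].
   pose proof (SerCv_summable d D _ _ _ _ (good_l D A) HsS) as Hsum.
   destruct (Main_l d D A HD r f H Hro) as [Hf Hs].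
   pose proof (IterL d D A r f Hf Hs) as Hit.
   assert (H0 : cnt r [] = Some O).
   { apply (StarZero d D A (κl D A) r f HD (good_l D A) Hf Hit). intros Q i j Hi Hj. eexists. apply (proj1 (mser_iff _ _ _) (Hcv Q)); auto. }
   destruct (Main_r d D A HD r g' Hg' Hro) as [_ Hsr].
   pose proof (IterR d D A r g' Hf Hsr) as Hitr.
   destruct (Star_bwd d D A (κr D A) r g' (good_r D A) Hf H0 Hitr Hsum) as [h Hh].
   exists h. apply (ER_star D A r g' h); auto. Qed.

Lemma triv_r D A : D = 0%nat -> forall r, exists f, ER D A r f.
Proof. intros HD r. induction r as [c|r1 [f1 H1] r2 [f2 H2]|r1 [f1 H1] r2 [f2 H2]|r [f H]].
 - eexists; apply ER_chr. - eexists; apply ER_cat; eauto. - eexists; apply ER_alt; eauto.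
 - exists (fun Q => Q). apply (ER_star D A r f); auto. intros Q i j Hi. lia. Qed.
Lemma triv_l D A : D = 0%nat -> forall r, exists f, EL D A r f.
Proof. intros HD r. induction r as [c|r1 [f1 H1] r2 [f2 H2]|r1 [f1 H1] r2 [f2 H2]|r [f H]].
 - eexists; apply EL_chr. - eexists; apply EL_cat; eauto. - eexists; apply EL_alt; eauto.
 - exists (fun Q => Q). apply (EL_star D A r f); auto. intros Q i j Hi. lia. Qed.

Lemma lang_coef d R s : unambiguous d R -> word_over d s -> lang_ind R s = coefR (cnt R s).
Proof. intros HU Hs. unfold lang_ind. destruct (HU s Hs) as [E|E]; rewrite E; simpl; reflexivity. Qed.

Theorem theorem2 (d D : nat) (A : nat -> Mat) (R : regex) (HR : regex_over d R) :
  (conv_r D A R <-> conv_l D A R) /\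
  (conv_r D A R -> (0 < D)%nat -> forall s, word_over d s -> cnt R s <> None) /\
  (forall f, ER D A R f ->
     (forall Q, mser_cv D
        (fun n => wsum d n (fun s => mscale (coefR (cnt R s)) (conjR D A s Q))) (f Q)) /\
     (unambiguous d R -> forall Q, mser_cv D
        (fun n => wsum d n (fun s => mscale (lang_ind R s) (conjR D A s Q))) (f Q))) /\
  (forall g, EL D A R g ->
     (forall Q, mser_cv D
        (fun n => wsum d n (fun s => mscale (coefR (cnt R s)) (conjL D A s Q))) (g Q)) /\
     (unambiguous d R -> forall Q, mser_cv D
        (fun n => wsum d n (fun s => mscale (lang_ind R s) (conjL D A s Q))) (g Q))).
Proof.
 destruct (Nat.eq_dec D 0) as [HD0|HD].
 { split; [|split; [|split]].
   - split; intros _; [apply triv_l|apply triv_r]; auto.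
   - intros _ H; lia.
   - intros f _; split; [|intros _]; intros Q i j Hi; lia.
   - intros f _; split; [|intros _]; intros Q i j Hi; lia. }
 assert (HDp : (0 < D)%nat) by lia.
 split; [|split; [|split]].
 - split; intros [f H]; [apply (Eq_rl d D A HDp R f H HR)|apply (Eq_lr d D A HDp R f H HR)].
 - intros [f H] _ s Hs. apply (proj1 (Main_r d D A HDp R f H HR)); auto.
 - intros f H. destruct (Main_r d D A HDp R f H HR) as [_ Hs]. split; [|intros HU]; intros Q; apply mser_iff; intros i j Hi Hj;
   (eapply is_ext; [|apply (Hs Q i j Hi Hj)]); intros n; rewrite wsum_ij; unfold Lv; apply ws_ext; intros s _ Hso;
   unfold mscale; rewrite conjR_Cs; unfold wR; try rewrite (lang_coef d R s HU Hso); reflexivity.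
 - intros f H. destruct (Main_l d D A HDp R f H HR) as [_ Hs]. split; [|intros HU]; intros Q; apply mser_iff; intros i j Hi Hj;
   (eapply is_ext; [|apply (Hs Q i j Hi Hj)]); intros n; rewrite wsum_ij; unfold Lv; apply ws_ext; intros s _ Hso;
   unfold mscale; rewrite conjL_Cs; unfold wR; try rewrite (lang_coef d R s HU Hso); reflexivity.
Qed.
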